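(* For $\tau$ in the upper half-plane: (a) $x=\mathfrak{b}(\tau)$ and $y=\mathfrak{b}(2\tau)$ satisfy $x^2y^2+4y^2-16x=0$; (b) $(\mathfrak{b}(\tau)+2)^4\,\mathfrak{b}^4(4\tau)=2^8\left(\mathfrak{b}^3(\tau)+4\mathfrak{b}(\tau)\right)$.
   Context: $q=e^{2\pi i\tau}$, $q^r:=e^{2\pi i r\tau}$, and $\mathfrak{b}(\tau)=2\prod_{n\ge1}\left(\frac{1-q^{n/2-1/4}}{1+q^{n/2-1/4}}\right)^2$ (equivalently $2\mathfrak{f}_1(\tau/2)^2/\mathfrak{f}(\tau/2)^2$ with Weber–Schläfli functions $\mathfrak{f},\mathfrak{f}_1$). *)

(* Defs.v *)
From Stdlib Require Import Reals.
From Coquelicot Require Export Coquelicot.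
Open Scope R_scope.

(* q^r := e^{2 pi i r tau}, written out via the real exponential,
   cosine and sine:  e^{2 pi i r (a + i b)} = e^{-2 pi r b} (cos(2 pi r a) + i sin(2 pi r a)). *)
Definition qpow (tau : C) (r : R) : C :=
  (exp (- 2 * PI * r * Im tau) * cos (2 * PI * r * Re tau),
   exp (- 2 * PI * r * Im tau) * sin (2 * PI * r * Re tau)).

Definition bfactor (tau : C) (n : nat) : C :=
  let e := INR n / 2 - / 4 in
  let t := Cdiv (Cminus (RtoC 1) (qpow tau e)) (Cplus (RtoC 1) (qpow tau e)) in
  Cmult t t.

Fixpoint bpartial (tau : C) (N : nat) : C :=
  match N with
  | O => RtoC 1
  | S k => Cmult (bpartial tau k) (bfactor tau (S k))
  end.

Definition bfun (tau : C) : C :=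
  Cmult (RtoC 2) (@lim (CompleteNormedModule.CompleteSpace _ C_CompleteNormedModule)
                        (filtermap (bpartial tau) eventually)).

(* Main.v *)
Require Import Defs.
From Stdlib Require Import Reals Lra Lia Psatz ZArith.
From Stdlib Require Import ClassicalEpsilon.
From Coquelicot Require Import Coquelicot.


Local Open Scope R_scope.

Fixpoint csum (f : nat -> C) (n : nat) : C :=
  match n with O => RtoC 0 | S k => Cplus (csum f k) (f k) end.
Fixpoint rsum (f : nat -> R) (n : nat) : R :=
  match n with O => 0 | S k => rsum f k + f k end.
Fixpoint cprod (f : nat -> C) (n : nat) : C :=
  match n with O => RtoC 1 | S k => Cmult (cprod f k) (f k) end.

Definition cv (u : nat -> C) (l : C) :=
  forall eps, 0 < eps -> exists N, forall n, (N <= n)%nat -> Cmod (Cminus (u n) l) < eps.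

Lemma Cmod_sub_sym (a b : C) : Cmod (a - b)%C = Cmod (b - a)%C.
Proof. replace (a - b)%C with (- (b - a))%C by ring. apply Cmod_opp. Qed.

Lemma Cmod_tri3 (a b c : C) : Cmod (a - b)%C <= Cmod (a - c)%C + Cmod (c - b)%C.
Proof. replace (a - b)%C with ((a - c) + (c - b))%C by ring. apply Cmod_triangle. Qed.

Lemma Cmod_sub_ge (a b : C) : Cmod a - Cmod b <= Cmod (a - b)%C.
Proof.
  assert (H := Cmod_triangle (a - b)%C b).
  replace (a - b + b)%C with a in H by ring. lra.
Qed.

Lemma Cmod_plus_ge (a b : C) : Cmod a - Cmod b <= Cmod (a + b)%C.
Proof.
  assert (H := Cmod_sub_ge a (- b)%C). rewrite Cmod_opp in H.
  replace (a - - b)%C with (a + b)%C in H by ring. exact H.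
Qed.

Lemma cv_unique u l1 l2 : cv u l1 -> cv u l2 -> l1 = l2.
Proof.
  intros H1 H2.
  destruct (Req_dec (Cmod (l1 - l2)%C) 0) as [E|E].
  - apply Cmod_eq_0 in E. replace l1 with ((l1 - l2) + l2)%C by ring. rewrite E. ring.
  - assert (P : 0 < Cmod (l1 - l2)%C) by (pose proof (Cmod_ge_0 (l1 - l2)%C); lra).
    destruct (H1 _ (Rdiv_lt_0_compat _ 2 P ltac:(lra))) as [N1 HN1].
    destruct (H2 _ (Rdiv_lt_0_compat _ 2 P ltac:(lra))) as [N2 HN2].
    specialize (HN1 (max N1 N2) ltac:(lia)). specialize (HN2 (max N1 N2) ltac:(lia)).
    pose proof (Cmod_tri3 l1 l2 (u (max N1 N2))).
    rewrite (Cmod_sub_sym l1 (u _)) in H. lra.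
Qed.

Lemma cv_const c : cv (fun _ => c) c.
Proof. intros e He. exists O. intros. replace (c - c)%C with (RtoC 0) by ring. rewrite Cmod_0. lra. Qed.

Lemma cv_ext u v l : (forall n, u n = v n) -> cv u l -> cv v l.
Proof. intros E H e He. destruct (H e He) as [N HN]. exists N. intros. rewrite <- E. auto. Qed.

Lemma cv_ext_ev u v l N0 : (forall n, (N0 <= n)%nat -> u n = v n) -> cv u l -> cv v l.
Proof. intros E H e He. destruct (H e He) as [N HN]. exists (max N N0). intros. rewrite <- E by lia. apply HN; lia. Qed.

Lemma cv_plus u v l m : cv u l -> cv v m -> cv (fun n => u n + v n)%C (l + m)%C.
Proof.
  intros Hu Hv e He.
  destruct (Hu (e/2) ltac:(lra)) as [N1 H1]. destruct (Hv (e/2) ltac:(lra)) as [N2 H2].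
  exists (max N1 N2). intros n Hn.
  replace (u n + v n - (l + m))%C with ((u n - l) + (v n - m))%C by ring.
  eapply Rle_lt_trans. apply Cmod_triangle.
  specialize (H1 n ltac:(lia)). specialize (H2 n ltac:(lia)). lra.
Qed.

Lemma cv_opp u l : cv u l -> cv (fun n => - u n)%C (- l)%C.
Proof.
  intros Hu e He. destruct (Hu e He) as [N H]. exists N. intros n Hn.
  replace (- u n - - l)%C with (- (u n - l))%C by ring. rewrite Cmod_opp. auto.
Qed.

Lemma cv_minus u v l m : cv u l -> cv v m -> cv (fun n => u n - v n)%C (l - m)%C.
Proof. intros. apply cv_plus; auto. apply cv_opp; auto. Qed.

Lemma cv_bounded u l : cv u l -> exists M N, 0 < M /\ forall n, (N <= n)%nat -> Cmod (u n) <= M.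
Proof.
  intros H. destruct (H 1 ltac:(lra)) as [N HN]. exists (Cmod l + 1), N. split.
  pose proof (Cmod_ge_0 l); lra.
  intros n Hn. specialize (HN n Hn). pose proof (Cmod_sub_ge (u n) l). lra.
Qed.

Lemma cv_mult u v l m : cv u l -> cv v m -> cv (fun n => u n * v n)%C (l * m)%C.
Proof.
  intros Hu Hv e He.
  destruct (cv_bounded u l Hu) as [M [N0 [HM HB]]].
  set (K := Cmod m + 1).
  assert (HK : 0 < K) by (unfold K; pose proof (Cmod_ge_0 m); lra).
  destruct (Hu (e/(2*K))) as [N1 H1]. apply Rdiv_lt_0_compat; lra.
  destruct (Hv (e/(2*M))) as [N2 H2]. apply Rdiv_lt_0_compat; lra.
  exists (max N0 (max N1 N2)). intros n Hn.
  replace (u n * v n - l * m)%C with (u n * (v n - m) + (u n - l) * m)%C by ring.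
  eapply Rle_lt_trans. apply Cmod_triangle. rewrite !Cmod_mult.
  specialize (H1 n ltac:(lia)). specialize (H2 n ltac:(lia)). specialize (HB n ltac:(lia)).
  assert (A1 : Cmod (u n) * Cmod (v n - m)%C <= M * (e / (2*M))).
  { apply Rmult_le_compat; try apply Cmod_ge_0; lra. }
  assert (A2 : Cmod (u n - l)%C * Cmod m <= (e/(2*K)) * K).
  { apply Rmult_le_compat; try apply Cmod_ge_0; unfold K in *; lra. }
  replace (M * (e / (2*M))) with (e/2) in A1 by (field; lra).
  replace (e/(2*K) * K) with (e/2) in A2 by (field; lra).
  assert (Cmod (u n) * Cmod (v n - m)%C + Cmod (u n - l)%C * Cmod m <= e/2 + e/2) by lra.
  assert (S1 : Cmod (u n - l)%C * Cmod m < (e/(2*K)) * K).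
  { apply Rle_lt_trans with (Cmod (u n - l)%C * K).
    apply Rmult_le_compat_l. apply Cmod_ge_0. unfold K; lra.
    apply Rmult_lt_compat_r; lra. }
  replace (e/(2*K) * K) with (e/2) in S1 by (field; lra).
  lra.
Qed.

Lemma cv_scal c u l : cv u l -> cv (fun n => c * u n)%C (c * l)%C.
Proof. intros. apply cv_mult; auto. apply cv_const. Qed.

Lemma cv_inv u l : cv u l -> l <> RtoC 0 -> cv (fun n => / u n)%C (/ l)%C.
Proof.
  intros Hu Hl e He.
  assert (Pl : 0 < Cmod l) by (apply Cmod_gt_0; auto).
  destruct (Hu (Cmod l / 2) ltac:(lra)) as [N0 H0].
  destruct (Hu (e * (Cmod l * Cmod l) / 2)) as [N1 H1].
  { apply Rdiv_lt_0_compat; [|lra]. apply Rmult_lt_0_compat; auto. apply Rmult_lt_0_compat; auto. }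
  exists (max N0 N1). intros n Hn.
  specialize (H0 n ltac:(lia)). specialize (H1 n ltac:(lia)).
  assert (Hun : Cmod l / 2 <= Cmod (u n)).
  { pose proof (Cmod_sub_ge l (u n)). rewrite Cmod_sub_sym in H0. lra. }
  assert (Hu0 : u n <> RtoC 0).
  { intro E. rewrite E, Cmod_0 in Hun. lra. }
  replace (/ u n - / l)%C with ((l - u n) / (u n * l))%C by (field; auto).
  rewrite Cmod_div by (apply Cmult_neq_0; auto). rewrite Cmod_mult.
  rewrite Cmod_sub_sym.
  apply Rmult_lt_reg_r with (Cmod (u n) * Cmod l).
  { apply Rmult_lt_0_compat; lra. }
  unfold Rdiv. rewrite Rmult_assoc, Rinv_l, Rmult_1_r.
  2:{ apply Rgt_not_eq. apply Rmult_lt_0_compat; lra. }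
  apply Rlt_le_trans with (e * (Cmod l * Cmod l) / 2). auto.
  assert (e * (Cmod l * Cmod l) / 2 = e * ((Cmod l / 2) * Cmod l)) by (field).
  rewrite H. apply Rmult_le_compat_l. lra. apply Rmult_le_compat_r; lra.
Qed.

Lemma cv_div u v l m : cv u l -> cv v m -> m <> RtoC 0 -> cv (fun n => u n / v n)%C (l / m)%C.
Proof. intros. apply cv_mult; auto. apply cv_inv; auto. Qed.

Lemma cv_shift u l k : cv u l -> cv (fun n => u (n + k)%nat) l.
Proof. intros H e He. destruct (H e He) as [N HN]. exists N. intros. apply HN. lia. Qed.

Lemma cv_shift_back u l k : cv (fun n => u (n + k)%nat) l -> cv u l.
Proof. intros H e He. destruct (H e He) as [N HN]. exists (N + k)%nat. intros n Hn.
  replace n with ((n - k) + k)%nat by lia. apply HN. lia. Qed.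

Lemma cv_sub u l (phi : nat -> nat) : (forall n, (n <= phi n)%nat) -> cv u l -> cv (fun n => u (phi n)) l.
Proof. intros Hp H e He. destruct (H e He) as [N HN]. exists N. intros. apply HN. specialize (Hp n). lia. Qed.

Lemma cv_le u l c K N : cv u l -> (forall n, (N <= n)%nat -> Cmod (u n - c)%C <= K) -> Cmod (l - c)%C <= K.
Proof.
  intros H HB. apply Rnot_lt_le. intro Hlt.
  destruct (H (Cmod (l - c)%C - K) ltac:(lra)) as [N1 HN1].
  specialize (HN1 (max N N1) ltac:(lia)). specialize (HB (max N N1) ltac:(lia)).
  pose proof (Cmod_tri3 l c (u (max N N1))). rewrite (Cmod_sub_sym l (u _)) in H0. lra.
Qed.

Lemma cv_cmod0 u l : (forall e, 0 < e -> exists N, forall n, (N <= n)%nat -> Cmod (u n - l)%C <= e) -> cv u l.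
Proof. intros H e He. destruct (H (e/2) ltac:(lra)) as [N HN]. exists N. intros n Hn. specialize (HN n Hn). lra. Qed.

Lemma C_cauchy_cv u :
  (forall e, 0 < e -> exists N, forall n m, (N <= n)%nat -> (N <= m)%nat -> Cmod (u n - u m)%C < e) ->
  exists l, cv u l.
Proof.
  intros H.
  assert (C1 : Cauchy_crit (fun n => fst (u n))).
  { intros e He. destruct (H e He) as [N HN]. exists N. intros n m Hn Hm.
    unfold R_dist. eapply Rle_lt_trans. 2: apply (HN n m); lia.
    eapply Rle_trans. 2: apply re_le_Cmod. unfold Re. simpl. right. f_equal. }
  assert (C2 : Cauchy_crit (fun n => snd (u n))).
  { intros e He. destruct (H e He) as [N HN]. exists N. intros n m Hn Hm.
    unfold R_dist. eapply Rle_lt_trans. 2: apply (HN n m); lia.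
    eapply Rle_trans. 2: apply (Rmax_Cmod). eapply Rle_trans. 2: apply Rmax_r.
    simpl. right. f_equal. }
  destruct (Rcomplete.R_complete _ C1) as [a Ha].
  destruct (Rcomplete.R_complete _ C2) as [b Hb].
  exists (a, b). intros e He.
  destruct (Ha (e/2) ltac:(lra)) as [N1 H1]. destruct (Hb (e/2) ltac:(lra)) as [N2 H2].
  exists (max N1 N2). intros n Hn.
  specialize (H1 n ltac:(lia)). specialize (H2 n ltac:(lia)). unfold R_dist in *.
  destruct (u n) as [x y]. simpl in *.
  unfold Cmod. simpl. apply Rle_lt_trans with (Rabs (x - a) + Rabs (y - b)).
  2: lra.
  apply Rsqr_incr_0_var. 2: pose proof (Rabs_pos (x-a)); pose proof (Rabs_pos (y-b)); lra.
  rewrite Rsqr_sqrt. 2: rewrite !Rmult_1_r; pose proof (Rle_0_sqr (x + - a)); pose proof (Rle_0_sqr (y + - b)); unfold Rsqr in *; lra.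
  unfold Rsqr. replace ((x + - a) * ((x + - a) * 1) + (y + - b) * ((y + - b) * 1))
     with (Rabs (x - a) * Rabs (x-a) + Rabs (y-b) * Rabs (y-b)).
  pose proof (Rabs_pos (x-a)); pose proof (Rabs_pos (y-b)); nra.
  rewrite <- !Rabs_mult. rewrite !Rabs_right. ring.
  apply Rle_ge, Rle_0_sqr. apply Rle_ge, Rle_0_sqr.
Qed.


Local Open Scope R_scope.

Lemma csum_ext f g n : (forall i, (i < n)%nat -> f i = g i) -> csum f n = csum g n.
Proof. induction n; simpl; intros; auto. rewrite IHn by (intros; apply H; lia). rewrite H by lia. auto. Qed.
Lemma rsum_ext f g n : (forall i, (i < n)%nat -> f i = g i) -> rsum f n = rsum g n.
Proof. induction n; simpl; intros; auto. rewrite IHn by (intros; apply H; lia). rewrite H by lia. auto. Qed.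
Lemma cprod_ext f g n : (forall i, (i < n)%nat -> f i = g i) -> cprod f n = cprod g n.
Proof. induction n; simpl; intros; auto. rewrite IHn by (intros; apply H; lia). rewrite H by lia. auto. Qed.

Lemma csum_plus f g n : csum (fun i => f i + g i)%C n = (csum f n + csum g n)%C.
Proof. induction n; simpl. ring. rewrite IHn. ring. Qed.
Lemma csum_scal c f n : csum (fun i => c * f i)%C n = (c * csum f n)%C.
Proof. induction n; simpl. ring. rewrite IHn. ring. Qed.
Lemma csum_opp f n : csum (fun i => - f i)%C n = (- csum f n)%C.
Proof. induction n; simpl. ring. rewrite IHn. ring. Qed.
Lemma csum_zero n : csum (fun _ => RtoC 0) n = RtoC 0.
Proof. induction n; simpl; auto. rewrite IHn. ring. Qed.
Lemma csum_shift f n : csum f (S n) = (f O + csum (fun i => f (S i)) n)%C.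
Proof. induction n. simpl. ring. change (csum f (S (S n))) with (csum f (S n) + f (S n))%C. rewrite IHn. simpl. ring. Qed.
Lemma csum_app f m n : csum f (m + n) = (csum f m + csum (fun i => f (m + i)%nat) n)%C.
Proof. induction n; simpl. rewrite Nat.add_0_r. ring. rewrite Nat.add_succ_r. simpl. rewrite IHn. ring. Qed.
Lemma csum_rev f n : csum f n = csum (fun i => f (n - 1 - i)%nat) n.
Proof.
  induction n. auto. change (csum f (S n)) with (csum f n + f n)%C. rewrite csum_shift. rewrite IHn.
  replace (S n - 1 - 0)%nat with n by lia. rewrite Cplus_comm. f_equal.
  apply csum_ext. intros. f_equal. lia.
Qed.
Lemma csum_tail0 f n m : (forall i, (n <= i)%nat -> f i = RtoC 0) -> (n <= m)%nat -> csum f m = csum f n.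
Proof.
  intros H Hm. replace m with (n + (m - n))%nat by lia. rewrite csum_app.
  rewrite (csum_ext (fun i => f (n + i)%nat) (fun _ => RtoC 0)) by (intros; apply H; lia). rewrite csum_zero. ring.
Qed.
Lemma csum_even_odd f n : csum f (2 * n) = (csum (fun i => f (2 * i)%nat) n + csum (fun i => f (2 * i + 1)%nat) n)%C.
Proof.
  induction n. simpl. ring. replace (2 * S n)%nat with (S (S (2 * n))) by lia.
  change (csum f (S (S (2 * n)))) with (csum f (2 * n) + f (2 * n)%nat + f (S (2 * n)))%C.
  change (csum (fun i => f (2 * i)%nat) (S n)) with (csum (fun i => f (2 * i)%nat) n + f (2 * n)%nat)%C.
  change (csum (fun i => f (2 * i + 1)%nat) (S n)) with (csum (fun i => f (2 * i + 1)%nat) n + f (2 * n + 1)%nat)%C.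
  rewrite IHn. replace (S (2 * n)) with (2 * n + 1)%nat by lia. ring.
Qed.
Lemma rsum_plus f g n : rsum (fun i => f i + g i) n = rsum f n + rsum g n.
Proof. induction n; simpl. ring. rewrite IHn. ring. Qed.
Lemma rsum_scal c f n : rsum (fun i => c * f i) n = c * rsum f n.
Proof. induction n; simpl. ring. rewrite IHn. ring. Qed.
Lemma rsum_le f g n : (forall i, f i <= g i) -> rsum f n <= rsum g n.
Proof. induction n; simpl; intros. lra. specialize (IHn H). specialize (H n). lra. Qed.
Lemma rsum_nonneg f n : (forall i, 0 <= f i) -> 0 <= rsum f n.
Proof. induction n; simpl; intros. lra. specialize (IHn H). specialize (H n). lra. Qed.
Lemma rsum_mono f n m : (forall i, 0 <= f i) -> (n <= m)%nat -> rsum f n <= rsum f m.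
Proof. intros H Hm. induction Hm. lra. simpl. specialize (H m). lra. Qed.
Lemma rsum_app f m n : rsum f (m + n) = rsum f m + rsum (fun i => f (m + i)%nat) n.
Proof. induction n; simpl. rewrite Nat.add_0_r. ring. rewrite Nat.add_succ_r. simpl. rewrite IHn. ring. Qed.
Lemma Cmod_csum f n : Cmod (csum f n) <= rsum (fun i => Cmod (f i)) n.
Proof. induction n; simpl. rewrite Cmod_0. lra. eapply Rle_trans. apply Cmod_triangle. lra. Qed.

Lemma geom_sum t n : t <> 1 -> rsum (fun i => t ^ i) n = (1 - t ^ n) / (1 - t).
Proof. intros. induction n; simpl. field. lra. rewrite IHn. field. lra. Qed.

Lemma pow_le_1 t n : 0 <= t <= 1 -> t ^ n <= 1.
Proof. intros. induction n; simpl. lra. nra. Qed.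

Lemma pow_decr t m n : 0 <= t <= 1 -> (m <= n)%nat -> t ^ n <= t ^ m.
Proof.
  intros Ht Hmn. replace n with (m + (n - m))%nat by lia. rewrite pow_add.
  pose proof (pow_le_1 t (n - m) Ht). pose proof (pow_le t m (proj1 Ht)). nra.
Qed.

Lemma geom_cv C t : 0 <= t < 1 -> Un_cv (rsum (fun i => C * t ^ i)) (C / (1 - t)).
Proof.
  intros Ht e He.
  destruct (Req_dec C 0) as [HC|HC].
  { exists O. intros. unfold R_dist. rewrite (rsum_ext _ (fun i => 0 * 1)).
    rewrite rsum_scal. subst. replace (0 * _ - 0 / (1 - t)) with 0 by (field; lra). rewrite Rabs_R0. auto.
    intros. subst. ring. }
  assert (P : 0 < e * (1 - t) / Rabs C).
  { apply Rdiv_lt_0_compat. nra. apply Rabs_pos_lt; auto. }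
  destruct (pow_lt_1_zero t ltac:(rewrite Rabs_right; lra) _ P) as [N HN].
  exists N. intros n Hn. unfold R_dist. rewrite rsum_scal, geom_sum by lra.
  replace (C * ((1 - t ^ n) / (1 - t)) - C / (1 - t)) with (- (C * t ^ n / (1 - t))) by (field; lra).
  rewrite Rabs_Ropp. specialize (HN n Hn).
  unfold Rdiv. rewrite !Rabs_mult. rewrite (Rabs_right (/ (1 - t))).
  2: { apply Rle_ge. left. apply Rinv_0_lt_compat. lra. }
  apply Rmult_lt_reg_r with (1 - t). lra. rewrite Rmult_assoc, Rinv_l, Rmult_1_r by lra.
  apply Rmult_lt_reg_l with (/ Rabs C). apply Rinv_0_lt_compat, Rabs_pos_lt; auto.
  rewrite <- Rmult_assoc, Rinv_l, Rmult_1_l. 2: apply Rgt_not_eq, Rabs_pos_lt; auto.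
  unfold Rdiv in HN. rewrite Rmult_comm. exact HN.
Qed.

Definition ser (u : nat -> C) (s : C) := cv (csum u) s.
Definition Sv (u : nat -> C) : C := epsilon (inhabits (RtoC 0)) (fun s => ser u s).

Lemma ser_unique u s1 s2 : ser u s1 -> ser u s2 -> s1 = s2.
Proof. apply cv_unique. Qed.
Lemma Sv_correct u : (exists s, ser u s) -> ser u (Sv u).
Proof. intros H. unfold Sv. apply epsilon_spec. auto. Qed.
Lemma Sv_eq u s : ser u s -> Sv u = s.
Proof. intros H. apply (ser_unique u). apply Sv_correct. eauto. auto. Qed.
Lemma Sv_ext u v : (forall j, u j = v j) -> Sv u = Sv v.
Proof. intros H. f_equal. apply FunctionalExtensionality.functional_extensionality. auto. Qed.

Lemma growing_le (u : nat -> R) l n : (forall k, u k <= u (S k)) -> Un_cv u l -> u n <= l.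
Proof. intros. apply growing_ineq; auto. Qed.

Lemma ser_dom u b beta :
  (forall j, Cmod (u j) <= b j) -> Un_cv (rsum b) beta ->
  exists s, ser u s /\ forall J, Cmod (s - csum u J)%C <= beta - rsum b J.
Proof.
  intros Hd Hb.
  assert (Hb0 : forall j, 0 <= b j) by (intros j; eapply Rle_trans; [apply Cmod_ge_0|apply Hd]).
  assert (Key : forall n m, (n <= m)%nat -> Cmod (csum u m - csum u n)%C <= rsum b m - rsum b n).
  { intros n m Hnm. replace m with (n + (m - n))%nat by lia. rewrite csum_app, rsum_app.
    replace (csum u n + csum (fun i => u (n + i)%nat) (m - n) - csum u n)%C
      with (csum (fun i => u (n + i)%nat) (m - n)) by ring.
    eapply Rle_trans. apply Cmod_csum.
    replace (rsum b n + rsum (fun i => b (n + i)%nat) (m - n) - rsum b n) with (rsum (fun i => b (n + i)%nat) (m - n)) by ring.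
    apply rsum_le; intros; auto.
    }
  assert (Hc := CV_Cauchy _ (exist _ beta Hb)).
  destruct (C_cauchy_cv (csum u)) as [s Hs].
  { intros e He. destruct (Hc e He) as [N HN]. exists N. intros n m Hn Hm.
    destruct (Nat.le_ge_cases n m).
    - rewrite Cmod_sub_sym. eapply Rle_lt_trans. apply Key; auto. specialize (HN m n Hm Hn). unfold R_dist in HN.
      eapply Rle_lt_trans. 2: exact HN. rewrite Rabs_right. lra. pose proof (rsum_mono b n m Hb0 H). lra.
    - eapply Rle_lt_trans. apply Key; auto. specialize (HN n m Hn Hm). unfold R_dist in HN.
      eapply Rle_lt_trans. 2: exact HN. rewrite Rabs_right. lra. pose proof (rsum_mono b m n Hb0 H). lra. }
  exists s. split. exact Hs. intros J.
  apply (cv_le (csum u) s (csum u J) _ J Hs). intros n Hn.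
  eapply Rle_trans. apply Key; auto.
  assert (rsum b n <= beta). { apply growing_le; auto. intros. simpl. specialize (Hb0 k). lra. }
  lra.
Qed.

Definition gdom (u : nat -> C) := exists C t, 0 <= C /\ 0 <= t < 1 /\ forall j, Cmod (u j) <= C * t ^ j.

Lemma gdom_ex u : gdom u -> exists s, ser u s.
Proof. intros [C [t [HC [Ht H]]]]. destruct (ser_dom u _ _ H (geom_cv C t Ht)) as [s [Hs _]]. eauto. Qed.

Lemma gdom_Sv u : gdom u -> ser u (Sv u).
Proof. intros. apply Sv_correct, gdom_ex; auto. Qed.

Lemma ser_plus u v s r : ser u s -> ser v r -> ser (fun j => u j + v j)%C (s + r)%C.
Proof. intros. unfold ser. eapply cv_ext. intros. symmetry. apply csum_plus. apply cv_plus; auto. Qed.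
Lemma ser_scal c u s : ser u s -> ser (fun j => c * u j)%C (c * s)%C.
Proof. intros. unfold ser. eapply cv_ext. intros. symmetry. apply csum_scal. apply cv_scal; auto. Qed.
Lemma ser_opp u s : ser u s -> ser (fun j => - u j)%C (- s)%C.
Proof. intros. unfold ser. eapply cv_ext. intros. symmetry. apply csum_opp. apply cv_opp; auto. Qed.

Lemma ser_shift u s : ser u s -> ser (fun j => u (S j)) (s - u O)%C.
Proof.
  intros H. unfold ser.
  eapply cv_ext. 2: apply cv_minus. 2: apply cv_shift with (k := 1%nat); exact H. 2: apply cv_const.
  intros n. simpl. rewrite Nat.add_1_r. rewrite (csum_shift u n). ring.
Qed.
Lemma ser_unshift u s : ser (fun j => u (S j)) s -> ser u (u O + s)%C.
Proof.
  intros H. unfold ser. apply cv_shift_back with 1%nat.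
  eapply cv_ext. 2: apply cv_plus. 2: apply cv_const. 2: exact H.
  intros n. simpl. rewrite Nat.add_1_r. rewrite (csum_shift u n). auto.
Qed.

Lemma ser_even_odd u s1 s2 : ser (fun j => u (2 * j)%nat) s1 -> ser (fun j => u (2 * j + 1)%nat) s2 ->
  (exists s, ser u s) -> ser u (s1 + s2)%C.
Proof.
  intros H1 H2 [s Hs].
  assert (E : s = (s1 + s2)%C).
  { apply (cv_unique (fun n => csum u (2 * n))).
    apply cv_sub with (phi := fun n => (2 * n)%nat) (u := csum u). intros; lia. exact Hs.
    eapply cv_ext. intros. symmetry. apply csum_even_odd. apply cv_plus; auto. }
  subst; auto.
Qed.

Lemma gdom_le u v : gdom u -> (forall j, Cmod (v j) <= Cmod (u j)) -> gdom v.
Proof. intros [C [t [HC [Ht H]]]] Hv. exists C, t. split; [auto|split; [auto|]]. intros j. eapply Rle_trans; eauto. Qed.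

Lemma gdom_sub u (phi : nat -> nat) : gdom u -> (forall j, (j <= phi j)%nat) -> gdom (fun j => u (phi j)).
Proof.
  intros [C [t [HC [Ht H]]]] Hp. exists C, t. split; [auto|split; [auto|]]. intros j.
  eapply Rle_trans. apply H. apply Rmult_le_compat_l; auto. apply pow_decr; auto. lra.
Qed.

Lemma gdom_plus u v : gdom u -> gdom v -> gdom (fun j => u j + v j)%C.
Proof.
  intros [C [t [HC [Ht H]]]] [D [r [HD [Hr H']]]].
  exists (C + D), (Rmax t r). split; [lra|split; [split|]].
  apply Rle_trans with t. lra. apply Rmax_l. apply Rmax_lub_lt; lra.
  intros j. eapply Rle_trans. apply Cmod_triangle.
  assert (t ^ j <= Rmax t r ^ j) by (apply pow_incr; split; [lra| apply Rmax_l]).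
  assert (r ^ j <= Rmax t r ^ j) by (apply pow_incr; split; [lra| apply Rmax_r]).
  specialize (H j). specialize (H' j).
  pose proof (pow_le t j (proj1 Ht)). pose proof (pow_le r j (proj1 Hr)).
  apply Rle_trans with (C * t ^ j + D * r ^ j). lra.
  rewrite Rmult_plus_distr_r. apply Rplus_le_compat; apply Rmult_le_compat_l; auto.
Qed.

Lemma gdom_scal c u : gdom u -> gdom (fun j => c * u j)%C.
Proof.
  intros [C [t [HC [Ht H]]]]. exists (Cmod c * C), t. split; [|split; [auto|]].
  apply Rmult_le_pos; auto. apply Cmod_ge_0.
  intros j. rewrite Cmod_mult, Rmult_assoc. apply Rmult_le_compat_l. apply Cmod_ge_0. auto.
Qed.

Lemma Sv_plus u v : gdom u -> gdom v -> Sv (fun j => u j + v j)%C = (Sv u + Sv v)%C.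
Proof. intros. apply Sv_eq. apply ser_plus; apply gdom_Sv; auto. Qed.
Lemma Sv_scal c u : gdom u -> Sv (fun j => c * u j)%C = (c * Sv u)%C.
Proof. intros. apply Sv_eq. apply ser_scal; apply gdom_Sv; auto. Qed.
Lemma Sv_shift u : gdom u -> Sv u = (u O + Sv (fun j => u (S j)))%C.
Proof.
  intros. apply Sv_eq. apply ser_unshift. apply gdom_Sv. apply gdom_sub with (phi := S); auto.
Qed.
Lemma Sv_even_odd u : gdom u -> Sv u = (Sv (fun j => u (2 * j)%nat) + Sv (fun j => u (2 * j + 1)%nat))%C.
Proof.
  intros. apply Sv_eq. apply ser_even_odd.
  apply gdom_Sv, gdom_sub; auto; intros; lia. apply gdom_Sv, gdom_sub; auto; intros; lia.
  apply gdom_ex; auto.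
Qed.


Local Open Scope R_scope.

Lemma dom_tail u C0 t : 0 <= C0 -> 0 <= t < 1 -> (forall j, Cmod (u j) <= C0 * t ^ j) ->
  forall J, Cmod (Sv u - csum u J)%C <= C0 / (1 - t) - rsum (fun i => C0 * t ^ i) J.
Proof.
  intros HC Ht H J. destruct (ser_dom u _ _ H (geom_cv C0 t Ht)) as [s [Hs HT]].
  rewrite (Sv_eq u s Hs). apply HT.
Qed.

Lemma cv_csum (a : nat -> nat -> C) (al : nat -> C) J :
  (forall j, cv (fun n => a n j) (al j)) -> cv (fun n => csum (a n) J) (csum al J).
Proof.
  intros H. induction J; simpl. apply cv_const. apply cv_plus; auto.
Qed.

Lemma tannery (a : nat -> nat -> C) (al : nat -> C) (C0 t : R) :
  0 <= C0 -> 0 <= t < 1 ->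
  (forall n j, Cmod (a n j) <= C0 * t ^ j) ->
  (forall j, cv (fun n => a n j) (al j)) ->
  cv (fun n => Sv (a n)) (Sv al).
Proof.
  intros HC Ht Hd Hl.
  assert (Hal : forall j, Cmod (al j) <= C0 * t ^ j).
  { intros j. replace (al j) with (al j - 0)%C by ring.
    apply (cv_le _ _ _ _ O (Hl j)). intros. replace (a n j - 0)%C with (a n j) by ring. auto. }
  intros e He.
  destruct (geom_cv C0 t Ht (e/4) ltac:(lra)) as [J HJ].
  specialize (HJ J (le_n _)). unfold R_dist in HJ.
  assert (Hr : C0 / (1 - t) - rsum (fun i => C0 * t ^ i) J < e / 4).
  { rewrite Rabs_minus_sym in HJ. eapply Rle_lt_trans. 2: exact HJ. apply Rle_abs. }
  destruct (cv_csum a al J Hl (e/4) ltac:(lra)) as [N HN].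
  exists N. intros n Hn. specialize (HN n Hn).
  pose proof (dom_tail (a n) C0 t HC Ht (Hd n) J) as T1.
  pose proof (dom_tail al C0 t HC Ht Hal J) as T2.
  eapply Rle_lt_trans. apply (Cmod_tri3 _ _ (csum (a n) J)).
  eapply Rle_lt_trans. apply Rplus_le_compat_l. apply (Cmod_tri3 _ _ (csum al J)).
  rewrite (Cmod_sub_sym (csum al J)). lra.
Qed.

Lemma geom_partial t N : 0 <= t < 1 -> rsum (fun i => t ^ i) N <= 1 / (1 - t).
Proof.
  intros Ht. rewrite geom_sum by lra. unfold Rdiv. apply Rmult_le_compat_r.
  left. apply Rinv_0_lt_compat. lra. pose proof (pow_le t N (proj1 Ht)). lra.
Qed.

Lemma Sv_csum (h : nat -> nat -> C) N : (forall b, gdom (fun a => h a b)) ->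
  Sv (fun a => csum (h a) N) = csum (fun b => Sv (fun a => h a b)) N.
Proof.
  intros H. induction N; simpl.
  - apply Sv_eq. unfold ser. eapply cv_ext. 2: apply cv_const. intros n. rewrite csum_zero. auto.
  - rewrite Sv_plus. rewrite IHN. auto.
    2: apply H.
    clear IHN. induction N; simpl.
    + exists 0, 0. split; [lra|split;[lra|]]. intros. rewrite Cmod_0. lra.
    + apply gdom_plus; auto.
Qed.

Lemma fubini_nat (h : nat -> nat -> C) C0 t : 0 <= C0 -> 0 <= t < 1 ->
  (forall a b, Cmod (h a b) <= C0 * t ^ a * t ^ b) ->
  Sv (fun a => Sv (h a)) = Sv (fun b => Sv (fun a => h a b)).
Proof.
  intros HC Ht Hd.
  assert (Gb : forall b, gdom (fun a => h a b)).
  { intros b. exists (C0 * t ^ b), t. split. apply Rmult_le_pos; auto. apply pow_le; lra.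
    split; auto. intros a. specialize (Hd a b). lra. }
  assert (T : cv (fun N => Sv (fun a => csum (h a) N)) (Sv (fun a => Sv (h a)))).
  { apply tannery with (C0 := C0 / (1 - t)) (t := t).
    apply Rdiv_le_0_compat; lra. auto.
    intros N a. eapply Rle_trans. apply Cmod_csum.
    eapply Rle_trans. apply rsum_le with (g := fun b => C0 * t ^ a * t ^ b). intros; apply Hd.
    rewrite rsum_scal. pose proof (geom_partial t N Ht).
    assert (0 <= C0 * t ^ a) by (apply Rmult_le_pos; auto; apply pow_le; lra).
    replace (C0 / (1 - t) * t ^ a) with (C0 * t ^ a * (1 / (1 - t))) by (field; lra).
    apply Rmult_le_compat_l; auto.
    intros a. apply gdom_Sv. exists (C0 * t ^ a), t. split. apply Rmult_le_pos; auto. apply pow_le; lra.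
    split; auto. }
  symmetry. apply Sv_eq. unfold ser. eapply cv_ext. 2: exact T. intros N. apply Sv_csum. auto.
Qed.


Local Open Scope R_scope.

Definition ZS (f : Z -> C) : C :=
  (Sv (fun j => f (Z.of_nat j)) + Sv (fun j => f (- Z.of_nat j - 1)%Z))%C.

Definition zdom (f : Z -> C) := exists C t, 0 <= C /\ 0 < t < 1 /\ forall z, Cmod (f z) <= C * t ^ (Z.abs_nat z).

Lemma absn_pos a : Z.abs_nat (Z.of_nat a) = a.
Proof. apply Zabs2Nat.id. Qed.
Lemma absn_neg a : Z.abs_nat (- Z.of_nat a - 1)%Z = S a.
Proof. apply Nat2Z.inj. rewrite Zabs2Nat.id_abs. lia. Qed.

Lemma ZS_ext f g : (forall z, f z = g z) -> ZS f = ZS g.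
Proof. intros H. unfold ZS. f_equal; apply Sv_ext; auto. Qed.

Lemma zdom_gpos f : zdom f -> gdom (fun j => f (Z.of_nat j)).
Proof. intros [C [t [HC [Ht H]]]]. exists C, t. split; [auto|split;[lra|]]. intros j. rewrite <- (absn_pos j) at 2. auto. Qed.
Lemma zdom_gneg f : zdom f -> gdom (fun j => f (- Z.of_nat j - 1)%Z).
Proof.
  intros [C [t [HC [Ht H]]]]. exists C, t. split; [auto|split;[lra|]]. intros j.
  eapply Rle_trans. apply H. rewrite absn_neg. apply Rmult_le_compat_l; auto. apply pow_decr; lia || lra.
Qed.

Lemma zdom_plus f g : zdom f -> zdom g -> zdom (fun z => f z + g z)%C.
Proof.
  intros [C [t [HC [Ht H]]]] [D [r [HD [Hr H']]]].
  exists (C + D), (Rmax t r). split; [lra|split; [split|]].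
  apply Rlt_le_trans with t. lra. apply Rmax_l. apply Rmax_lub_lt; lra.
  intros j. eapply Rle_trans. apply Cmod_triangle.
  assert (t ^ Z.abs_nat j <= Rmax t r ^ Z.abs_nat j) by (apply pow_incr; split; [lra| apply Rmax_l]).
  assert (r ^ Z.abs_nat j <= Rmax t r ^ Z.abs_nat j) by (apply pow_incr; split; [lra| apply Rmax_r]).
  specialize (H j). specialize (H' j).
  apply Rle_trans with (C * t ^ Z.abs_nat j + D * r ^ Z.abs_nat j). lra.
  rewrite Rmult_plus_distr_r. apply Rplus_le_compat; apply Rmult_le_compat_l; auto.
Qed.

Lemma zdom_scal c f : zdom f -> zdom (fun z => c * f z)%C.
Proof.
  intros [C [t [HC [Ht H]]]]. exists (Cmod c * C), t. split; [|split; [auto|]].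
  apply Rmult_le_pos; auto. apply Cmod_ge_0.
  intros j. rewrite Cmod_mult, Rmult_assoc. apply Rmult_le_compat_l. apply Cmod_ge_0. auto.
Qed.

Lemma zdom_le f g : zdom f -> (forall z, Cmod (g z) <= Cmod (f z)) -> zdom g.
Proof. intros [C [t [HC [Ht H]]]] Hv. exists C, t. split; [auto|split; [auto|]]. intros j. eapply Rle_trans; eauto. Qed.

Lemma ZS_plus f g : zdom f -> zdom g -> ZS (fun z => f z + g z)%C = (ZS f + ZS g)%C.
Proof.
  intros Hf Hg. unfold ZS.
  rewrite (Sv_plus (fun j => f (Z.of_nat j)) (fun j => g (Z.of_nat j))) by (apply zdom_gpos; auto).
  rewrite (Sv_plus (fun j => f (- Z.of_nat j - 1)%Z) (fun j => g (- Z.of_nat j - 1)%Z)) by (apply zdom_gneg; auto).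
  ring.
Qed.

Lemma ZS_scal c f : zdom f -> ZS (fun z => c * f z)%C = (c * ZS f)%C.
Proof.
  intros Hf. unfold ZS.
  rewrite (Sv_scal c (fun j => f (Z.of_nat j))) by (apply zdom_gpos; auto).
  rewrite (Sv_scal c (fun j => f (- Z.of_nat j - 1)%Z)) by (apply zdom_gneg; auto).
  ring.
Qed.

Lemma zdom_g f (phi : nat -> Z) : zdom f -> (forall j, (j <= Z.abs_nat (phi j))%nat) -> gdom (fun j => f (phi j)).
Proof.
  intros [C [t [HC [Ht H]]]] Hp. exists C, t. split; [auto|split;[lra|]]. intros j.
  eapply Rle_trans. apply H. apply Rmult_le_compat_l; auto. apply pow_decr. lra. auto.
Qed.

Ltac absn := intros; apply Nat2Z.inj_le; rewrite Zabs2Nat.id_abs; lia.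

Lemma zdom_shift f c : zdom f -> zdom (fun z => f (z + c)%Z).
Proof.
  intros [C [t [HC [Ht H]]]]. exists (C / t ^ Z.abs_nat c), t.
  assert (Tp : forall n, 0 < t ^ n) by (intros; apply pow_lt; lra).
  split. apply Rdiv_le_0_compat; auto. split; auto. intros z.
  eapply Rle_trans. apply H.
  assert (X : t ^ Z.abs_nat (z + c) <= t ^ Z.abs_nat z / t ^ Z.abs_nat c).
  { apply Rmult_le_reg_r with (t ^ Z.abs_nat c). auto.
    unfold Rdiv. rewrite Rmult_assoc, Rinv_l, Rmult_1_r by (apply Rgt_not_eq, Tp).
    rewrite <- pow_add. apply pow_decr. lra.
    apply Nat2Z.inj_le. rewrite Nat2Z.inj_add, !Zabs2Nat.id_abs. lia. }
  replace (C / t ^ Z.abs_nat c * t ^ Z.abs_nat z) with (C * (t ^ Z.abs_nat z / t ^ Z.abs_nat c))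
    by (field; apply Rgt_not_eq, Tp).
  apply Rmult_le_compat_l; auto.
Qed.

Lemma ZS_shift1 f : zdom f -> ZS (fun z => f (z + 1)%Z) = ZS f.
Proof.
  intros Hf. unfold ZS.
  rewrite (Sv_shift (fun j => f (Z.of_nat j))) by (apply zdom_g; auto; absn).
  rewrite (Sv_shift (fun j => f (- Z.of_nat j - 1 + 1)%Z)) by (apply zdom_g; auto; absn).
  rewrite (Sv_ext (fun j => f (Z.of_nat (S j))) (fun j => f (Z.of_nat j + 1)%Z))
    by (intros; f_equal; lia).
  rewrite (Sv_ext (fun j => f (- Z.of_nat (S j) - 1 + 1)%Z) (fun j => f (- Z.of_nat j - 1)%Z))
    by (intros; f_equal; lia).
  replace (- Z.of_nat 0 - 1 + 1)%Z with (Z.of_nat 0) by lia. ring.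
Qed.

Lemma ZS_shift_nat f n : zdom f -> ZS (fun z => f (z + Z.of_nat n)%Z) = ZS f.
Proof.
  intros Hf. induction n.
  - apply ZS_ext. intros. f_equal. lia.
  - rewrite <- IHn. rewrite <- (ZS_shift1 (fun z => f (z + Z.of_nat n)%Z)) by (apply zdom_shift; auto).
    apply ZS_ext. intros. f_equal. lia.
Qed.

Lemma ZS_shift f c : zdom f -> ZS (fun z => f (z + c)%Z) = ZS f.
Proof.
  intros Hf. destruct (Z_le_gt_dec 0 c).
  - replace c with (Z.of_nat (Z.to_nat c)) by lia. apply ZS_shift_nat; auto.
  - set (n := Z.to_nat (- c)).
    rewrite <- (ZS_shift_nat (fun z => f (z + c)%Z) n) by (apply zdom_shift; auto).
    apply ZS_ext. intros. f_equal. unfold n. lia.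
Qed.

Lemma ZS_parity f : zdom f -> ZS f = (ZS (fun z => f (2 * z)%Z) + ZS (fun z => f (2 * z + 1)%Z))%C.
Proof.
  intros Hf. unfold ZS.
  rewrite (Sv_even_odd (fun j => f (Z.of_nat j))) by (apply zdom_g; auto; absn).
  rewrite (Sv_even_odd (fun j => f (- Z.of_nat j - 1)%Z)) by (apply zdom_g; auto; absn).
  rewrite (Sv_ext (fun j => f (Z.of_nat (2 * j))) (fun j => f (2 * Z.of_nat j)%Z)) by (intros; f_equal; lia).
  rewrite (Sv_ext (fun j => f (Z.of_nat (2 * j + 1))) (fun j => f (2 * Z.of_nat j + 1)%Z)) by (intros; f_equal; lia).
  rewrite (Sv_ext (fun j => f (- Z.of_nat (2 * j) - 1)%Z) (fun j => f (2 * (- Z.of_nat j - 1) + 1)%Z)) by (intros; f_equal; lia).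
  rewrite (Sv_ext (fun j => f (- Z.of_nat (2 * j + 1) - 1)%Z) (fun j => f (2 * (- Z.of_nat j - 1))%Z)) by (intros; f_equal; lia).
  ring.
Qed.

Lemma Sv_bound u C0 t : 0 <= C0 -> 0 <= t < 1 -> (forall j, Cmod (u j) <= C0 * t ^ j) -> Cmod (Sv u) <= C0 / (1 - t).
Proof.
  intros. pose proof (dom_tail u C0 t H H0 H1 O). simpl in H2.
  replace (Sv u - 0)%C with (Sv u) in H2 by ring. lra.
Qed.

Lemma ZS_bound f C0 t : 0 <= C0 -> 0 < t < 1 -> (forall z, Cmod (f z) <= C0 * t ^ Z.abs_nat z) -> Cmod (ZS f) <= 2 * C0 / (1 - t).
Proof.
  intros. unfold ZS. eapply Rle_trans. apply Cmod_triangle.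
  assert (Cmod (Sv (fun j => f (Z.of_nat j))) <= C0 / (1 - t)).
  { apply Sv_bound; auto. lra. intros. rewrite <- (absn_pos j) at 2. auto. }
  assert (Cmod (Sv (fun j => f (- Z.of_nat j - 1)%Z)) <= C0 / (1 - t)).
  { apply Sv_bound; auto. lra. intros. eapply Rle_trans. apply H1. apply Rmult_le_compat_l; auto.
    apply pow_decr. lra. rewrite absn_neg. lia. }
  replace (2 * C0 / (1 - t)) with (C0 / (1 - t) + C0 / (1 - t)) by (field; lra). lra.
Qed.

Definition gbound (g : Z -> Z -> C) C0 t := forall a b, Cmod (g a b) <= C0 * t ^ Z.abs_nat a * t ^ Z.abs_nat b.

Lemma gbound_swap g C0 t : gbound g C0 t -> gbound (fun a b => g b a) C0 t.
Proof. intros H a b. rewrite (Rmult_assoc C0), (Rmult_comm (t ^ _)), <- Rmult_assoc. apply H. Qed.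

Lemma gb_inner g C0 t (pa pb : nat -> Z) : 0 <= C0 -> 0 < t < 1 -> gbound g C0 t ->
  (forall j, (j <= Z.abs_nat (pb j))%nat) -> forall a, gdom (fun b => g (pa a) (pb b)).
Proof.
  intros HC Ht Hd Hb a. exists (C0 * t ^ Z.abs_nat (pa a)), t. split. apply Rmult_le_pos; auto. apply pow_le; lra.
  split. lra. intros b. eapply Rle_trans. apply Hd. apply Rmult_le_compat_l. apply Rmult_le_pos; auto. apply pow_le; lra.
  apply pow_decr; auto. lra.
Qed.

Lemma gb_outer g C0 t (pa pb : nat -> Z) : 0 <= C0 -> 0 < t < 1 -> gbound g C0 t ->
  (forall j, (j <= Z.abs_nat (pa j))%nat) -> (forall j, (j <= Z.abs_nat (pb j))%nat) ->
  gdom (fun a => Sv (fun b => g (pa a) (pb b))).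
Proof.
  intros HC Ht Hd Ha Hb. exists (C0 / (1 - t)), t. split. apply Rdiv_le_0_compat; lra. split. lra.
  intros a. eapply Rle_trans. apply Sv_bound with (C0 := C0 * t ^ Z.abs_nat (pa a)) (t := t).
  apply Rmult_le_pos; auto. apply pow_le; lra. lra.
  intros b. eapply Rle_trans. apply Hd. apply Rmult_le_compat_l. apply Rmult_le_pos; auto. apply pow_le; lra.
  apply pow_decr; auto; lra.
  unfold Rdiv. rewrite Rmult_assoc, (Rmult_comm (t ^ _)), <- Rmult_assoc.
  apply Rmult_le_compat_l. apply Rmult_le_pos; auto. left; apply Rinv_0_lt_compat; lra.
  apply pow_decr; auto; lra.
Qed.

Lemma gb_fub g C0 t (pa pb : nat -> Z) : 0 <= C0 -> 0 < t < 1 -> gbound g C0 t ->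
  (forall j, (j <= Z.abs_nat (pa j))%nat) -> (forall j, (j <= Z.abs_nat (pb j))%nat) ->
  Sv (fun a => Sv (fun b => g (pa a) (pb b))) = Sv (fun b => Sv (fun a => g (pa a) (pb b))).
Proof.
  intros HC Ht Hd Ha Hb. apply fubini_nat with C0 t; auto. lra. intros a b.
  eapply Rle_trans. apply Hd. rewrite Rmult_assoc, Rmult_assoc. apply Rmult_le_compat_l; auto.
  pose proof (pow_le t (Z.abs_nat (pb b)) ltac:(lra)). pose proof (pow_le t a ltac:(lra)).
  apply Rmult_le_compat; auto. apply pow_le; lra. apply pow_decr; auto; lra. apply pow_decr; auto; lra.
Qed.

Lemma ZS_fubini (g : Z -> Z -> C) C0 t : 0 <= C0 -> 0 < t < 1 -> gbound g C0 t ->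
  ZS (fun a => ZS (g a)) = ZS (fun b => ZS (fun a => g a b)).
Proof.
  intros HC Ht Hd.
  assert (P1 : forall j, (j <= Z.abs_nat (Z.of_nat j))%nat) by absn.
  assert (P2 : forall j, (j <= Z.abs_nat (- Z.of_nat j - 1)%Z)%nat) by absn.
  pose proof (gbound_swap _ _ _ Hd) as Hd'.
  unfold ZS.
  rewrite (Sv_plus (fun j => Sv (fun b => g (Z.of_nat j) (Z.of_nat b))) (fun j => Sv (fun b => g (Z.of_nat j) (- Z.of_nat b - 1)%Z)))
    by (apply (gb_outer g C0 t); auto).
  rewrite (Sv_plus (fun j => Sv (fun b => g (- Z.of_nat j - 1)%Z (Z.of_nat b))) (fun j => Sv (fun b => g (- Z.of_nat j - 1)%Z (- Z.of_nat b - 1)%Z)))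
    by (apply (gb_outer g C0 t); auto).
  rewrite (Sv_plus (fun j => Sv (fun a => g (Z.of_nat a) (Z.of_nat j))) (fun j => Sv (fun a => g (- Z.of_nat a - 1)%Z (Z.of_nat j))))
    by (apply (gb_outer (fun a b => g b a) C0 t); auto).
  rewrite (Sv_plus (fun j => Sv (fun a => g (Z.of_nat a) (- Z.of_nat j - 1)%Z)) (fun j => Sv (fun a => g (- Z.of_nat a - 1)%Z (- Z.of_nat j - 1)%Z)))
    by (apply (gb_outer (fun a b => g b a) C0 t); auto).
  rewrite (gb_fub g C0 t (fun j => Z.of_nat j) (fun j => Z.of_nat j)) by auto.
  rewrite (gb_fub g C0 t (fun j => Z.of_nat j) (fun j => (- Z.of_nat j - 1)%Z)) by auto.
  rewrite (gb_fub g C0 t (fun j => (- Z.of_nat j - 1)%Z) (fun j => Z.of_nat j)) by auto.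
  rewrite (gb_fub g C0 t (fun j => (- Z.of_nat j - 1)%Z) (fun j => (- Z.of_nat j - 1)%Z)) by auto.
  ring.
Qed.


Local Open Scope R_scope.

Definition sgv (s : bool) : C := if s then RtoC 1 else RtoC (-1).
Definition sg (s : bool) (z : Z) : C := if s then RtoC 1 else if Z.even z then RtoC 1 else RtoC (-1).
Definition th (q : C) (s : bool) : C := ZS (fun z => sg s z * q ^ Z.to_nat (z * z))%C.
Definition Eq (q : C) : C := ZS (fun z => q ^ Z.to_nat ((2 * z) * (2 * z)))%C.
Definition Oq (q : C) : C := ZS (fun z => q ^ Z.to_nat ((2 * z + 1) * (2 * z + 1)))%C.

Lemma Cmod_sg s z : Cmod (sg s z) = 1.
Proof. unfold sg. destruct s. apply Cmod_1. destruct (Z.even z). apply Cmod_1.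
  rewrite Cmod_R, Rabs_left by lra. lra. Qed.

Lemma sg_add s x y : (sg s x * sg s y)%C = sg s (x + y).
Proof.
  unfold sg. destruct s. ring. rewrite Z.even_add.
  destruct (Z.even x), (Z.even y); simpl; apply injective_projections; simpl; ring.
Qed.
Lemma sg_even s d : sg s (2 * d) = RtoC 1.
Proof. unfold sg. destruct s; auto. rewrite Z.even_mul. simpl. auto. Qed.
Lemma sg_odd s d : sg s (2 * d + 1) = sgv s.
Proof. unfold sg, sgv. destruct s; auto. rewrite Z.even_add, Z.even_mul. simpl. auto. Qed.

Lemma zdom_pw (f : Z -> C) (k : Z -> nat) q K : Cmod q < 1 ->
  (forall z, Cmod (f z) <= Cmod q ^ k z) -> (forall z, (Z.abs_nat z <= k z + K)%nat) -> zdom f.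
Proof.
  intros Hq Hf Hk. set (t := Rmax (Cmod q) (1/2)).
  assert (Ht : 0 < t < 1) by (unfold t; split; [apply Rlt_le_trans with (1/2); [lra|apply Rmax_r] | apply Rmax_lub_lt; lra]).
  assert (Tp : forall n, 0 < t ^ n) by (intros; apply pow_lt; lra).
  exists (1 / t ^ K), t. split. left. apply Rdiv_lt_0_compat; auto; lra. split; auto.
  intros z. eapply Rle_trans. apply Hf. eapply Rle_trans. apply pow_incr. split. apply Cmod_ge_0. apply (Rmax_l _ (1/2)).
  fold t. apply Rmult_le_reg_l with (t ^ K). auto.
  replace (t ^ K * (1 / t ^ K * t ^ Z.abs_nat z)) with (t ^ Z.abs_nat z) by (field; apply Rgt_not_eq, Tp).
  rewrite <- pow_add. apply pow_decr. lra. specialize (Hk z). lia.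
Qed.

Lemma Cmod_qpow q n : Cmod (q ^ n)%C = Cmod q ^ n.
Proof. apply Cmod_pow. Qed.

Lemma sqabs z : (Z.abs z <= z * z)%Z.
Proof. nia. Qed.

Ltac zabs := intros; apply Nat2Z.inj_le; rewrite ?Nat2Z.inj_add, ?Zabs2Nat.id_abs, ?Z2Nat.id by apply Z.square_nonneg.

Lemma zdom_sq s q : Cmod q < 1 -> zdom (fun z => sg s z * q ^ Z.to_nat (z * z))%C.
Proof.
  intros Hq. apply zdom_pw with (k := fun z => Z.to_nat (z * z)) (q := q) (K := O); auto.
  intros. rewrite Cmod_mult, Cmod_sg, Cmod_qpow. lra.
  zabs. pose proof (sqabs z). simpl. lia.
Qed.

Lemma zdom_lin q (a b : Z) : Cmod q < 1 -> (a <> 0)%Z -> zdom (fun z => q ^ Z.to_nat ((a * z + b) * (a * z + b)))%C.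
Proof.
  intros Hq Ha. apply zdom_pw with (k := fun z => Z.to_nat ((a * z + b) * (a * z + b))) (q := q) (K := Z.abs_nat b); auto.
  intros. rewrite Cmod_qpow. lra.
  zabs. pose proof (sqabs (a * z + b)). nia.
Qed.

Lemma zdom_E q : Cmod q < 1 -> zdom (fun z => q ^ Z.to_nat (2 * z * (2 * z)))%C.
Proof.
  intros Hq. apply zdom_pw with (k := fun z => Z.to_nat (2 * z * (2 * z))) (q := q) (K := O); auto.
  intros. rewrite Cmod_qpow. lra.
  zabs. pose proof (sqabs (2 * z)). assert (Z.abs z <= Z.abs (2 * z))%Z by (rewrite Z.abs_mul; change (Z.abs 2) with 2%Z; pose proof (Z.abs_nonneg z); lia). change (Z.of_nat 0) with 0%Z. lia.
Qed.

Lemma ZS_scal_r c f : zdom f -> (ZS f * c)%C = ZS (fun z => f z * c)%C.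
Proof. intros. rewrite Cmult_comm, <- ZS_scal by auto. apply ZS_ext. intros; ring. Qed.

Lemma th_parity q s : Cmod q < 1 -> th q s = (Eq q + sgv s * Oq q)%C.
Proof.
  intros Hq. unfold th. rewrite ZS_parity by (apply zdom_sq; auto).
  unfold Eq, Oq. rewrite <- ZS_scal by (apply (zdom_lin q 2 1); auto; lia).
  f_equal; apply ZS_ext; intros z.
  rewrite sg_even. ring. rewrite sg_odd. ring.
Qed.

Lemma zdom_ZS (g : Z -> Z -> C) C0 t : 0 <= C0 -> 0 < t < 1 -> gbound g C0 t -> zdom (fun b => ZS (fun a => g a b)).
Proof.
  intros HC Ht Hd. exists (2 * C0 / (1 - t)), t. split. apply Rdiv_le_0_compat; lra. split; auto.
  intros b. replace (2 * C0 / (1 - t) * t ^ Z.abs_nat b) with (2 * (C0 * t ^ Z.abs_nat b) / (1 - t)) by (field; lra).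
  apply ZS_bound. apply Rmult_le_pos; auto. apply pow_le; lra. auto.
  intros a. rewrite (Rmult_assoc C0), (Rmult_comm (t ^ Z.abs_nat b)), <- Rmult_assoc. apply Hd.
Qed.

Definition Gf (q : C) (s : bool) (a c : Z) : C :=
  (sg s c * q ^ (Z.to_nat (c * c) + Z.to_nat ((2 * a - c) * (2 * a - c))))%C.

Lemma expo a c : (Z.to_nat (a * a) + Z.to_nat (a * a) + (Z.to_nat ((c + - a) * (c + - a)) + Z.to_nat ((c + - a) * (c + - a))) =
   Z.to_nat (c * c) + Z.to_nat ((2 * a - c) * (2 * a - c)))%nat.
Proof. apply Nat2Z.inj. rewrite !Nat2Z.inj_add. rewrite !Z2Nat.id by apply Z.square_nonneg. ring. Qed.

Lemma gbound_G q s : Cmod q < 1 -> gbound (Gf q s) 1 (sqrt (Rmax (Cmod q) (1/2))).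
Proof.
  intros Hq a c. unfold Gf. rewrite Cmod_mult, Cmod_sg, Cmod_qpow, Rmult_1_l, Rmult_1_l.
  set (r := Rmax (Cmod q) (1/2)).
  assert (Hr : 1/2 <= r < 1) by (unfold r; split; [apply Rmax_r|apply Rmax_lub_lt; lra]).
  set (t := sqrt r).
  assert (Ht : 0 < t < 1).
  { unfold t. split. apply sqrt_lt_R0. lra.
    assert (X : sqrt r < sqrt 1) by (apply sqrt_lt_1_alt; lra). rewrite sqrt_1 in X. exact X. }
  assert (Ht2 : t ^ 2 = r) by (unfold t; simpl; rewrite Rmult_1_r; apply sqrt_sqrt; lra).
  eapply Rle_trans. apply pow_incr. split. apply Cmod_ge_0. apply (Rmax_l _ (1/2)). fold r.
  rewrite <- Ht2, <- pow_mult, <- pow_add. apply pow_decr. lra.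
  apply Nat2Z.inj_le. rewrite !Nat2Z.inj_add, Nat2Z.inj_mul, Nat2Z.inj_add, !Z2Nat.id by apply Z.square_nonneg.
  rewrite !Zabs2Nat.id_abs. pose proof (sqabs c). pose proof (sqabs (2 * a - c)). lia.
Qed.

Lemma th_sq q s : Cmod q < 1 -> (th (q * q) s * th (q * q) s)%C = (Eq q * Eq q + sgv s * Oq q * Oq q)%C.
Proof.
  intros Hq.
  assert (Hqq : Cmod (q * q)%C < 1).
  { rewrite Cmod_mult. pose proof (Cmod_ge_0 q). nra. }
  set (F := fun z => (sg s z * (q * q) ^ Z.to_nat (z * z))%C).
  assert (HF : zdom F) by (apply zdom_sq; auto).
  assert (S1 : (th (q * q) s * th (q * q) s)%C = ZS (fun a => ZS (Gf q s a))).
  { unfold th. fold F. rewrite ZS_scal_r by auto. apply ZS_ext. intros a.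
    rewrite <- ZS_scal by auto.
    rewrite <- (ZS_shift (fun b => F a * F b)%C (- a)) by (apply zdom_scal; auto).
    apply ZS_ext. intros c. unfold F, Gf.
    rewrite !Cpow_mult_l.
    transitivity ((sg s a * sg s (c + - a)) * q ^ (Z.to_nat (a * a) + Z.to_nat (a * a) + (Z.to_nat ((c + - a) * (c + - a)) + Z.to_nat ((c + - a) * (c + - a)))))%C.
    rewrite !Cpow_add_r. ring.
    rewrite expo, sg_add. f_equal. f_equal. lia. }
  rewrite S1.
  assert (Hq' : 0 < sqrt (Rmax (Cmod q) (1/2)) < 1).
  { split. apply sqrt_lt_R0. apply Rlt_le_trans with (1/2). lra. apply Rmax_r.
    assert (X : sqrt (Rmax (Cmod q) (1/2)) < sqrt 1).
    { apply sqrt_lt_1_alt. split. apply Rle_trans with (1/2). lra. apply Rmax_r. apply Rmax_lub_lt; lra. }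
    rewrite sqrt_1 in X. exact X. }
  rewrite (ZS_fubini (Gf q s) 1 _ ltac:(lra) Hq' (gbound_G q s Hq)).
  rewrite ZS_parity by (apply (zdom_ZS (Gf q s) 1 _ ltac:(lra) Hq' (gbound_G q s Hq))).
  assert (HE : forall d, ZS (fun a => Gf q s a (2 * d)%Z) = (q ^ Z.to_nat ((2 * d) * (2 * d)) * Eq q)%C).
  { intros d. unfold Gf. rewrite sg_even.
    rewrite (ZS_ext _ (fun a => q ^ Z.to_nat ((2 * d) * (2 * d)) * q ^ Z.to_nat ((2 * a + (- 2 * d)) * (2 * a + (- 2 * d))))%C).
    2: { intros a. rewrite Cpow_add_r. replace (2 * a - 2 * d)%Z with (2 * a + - 2 * d)%Z by ring. ring. }
    rewrite ZS_scal by (apply zdom_lin; auto; lia). f_equal.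
    unfold Eq. rewrite <- (ZS_shift (fun z => q ^ Z.to_nat (2 * z * (2 * z)))%C (- d)) by (apply zdom_E; auto).
    apply ZS_ext. intros a. f_equal. f_equal. f_equal; ring. }
  assert (HO : forall d, ZS (fun a => Gf q s a (2 * d + 1)%Z) = (sgv s * q ^ Z.to_nat ((2 * d + 1) * (2 * d + 1)) * Oq q)%C).
  { intros d. unfold Gf. rewrite sg_odd.
    rewrite (ZS_ext _ (fun a => (sgv s * q ^ Z.to_nat ((2 * d + 1) * (2 * d + 1))) * q ^ Z.to_nat ((2 * a + (- 2 * d - 1)) * (2 * a + (- 2 * d - 1))))%C).
    2: { intros a. rewrite Cpow_add_r. replace (2 * a - (2 * d + 1))%Z with (2 * a + (- 2 * d - 1))%Z by ring. ring. }
    rewrite ZS_scal by (apply zdom_lin; auto; lia). f_equal.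
    unfold Oq. rewrite <- (ZS_shift (fun z => q ^ Z.to_nat ((2 * z + 1) * (2 * z + 1)))%C (- d - 1)) by (apply (zdom_lin q 2 1); auto; lia).
    apply ZS_ext. intros a. f_equal. f_equal. f_equal; ring. }
  rewrite (ZS_ext _ _ HE), (ZS_ext _ _ HO).
  rewrite <- ZS_scal_r by (apply zdom_E; auto).
  rewrite (ZS_ext (fun z => sgv s * q ^ Z.to_nat ((2 * z + 1) * (2 * z + 1)) * Oq q)%C
                  (fun z => (sgv s * Oq q) * q ^ Z.to_nat ((2 * z + 1) * (2 * z + 1)))%C) by (intros; ring).
  rewrite ZS_scal by (apply (zdom_lin q 2 1); auto; lia).
  fold (Eq q). fold (Oq q). ring.
Qed.

Theorem theta_id1 q : Cmod q < 1 ->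
  (th q true * th q true + th q false * th q false)%C = (2 * (th (q * q) true * th (q * q) true))%C.
Proof.
  intros Hq. rewrite th_sq by auto. rewrite !th_parity by auto. unfold sgv.
  apply injective_projections; simpl; ring.
Qed.

Theorem theta_id2 q : Cmod q < 1 ->
  (th q true * th q false)%C = (th (q * q) false * th (q * q) false)%C.
Proof.
  intros Hq. rewrite th_sq by auto. rewrite !th_parity by auto. unfold sgv.
  apply injective_projections; simpl; ring.
Qed.


Local Open Scope R_scope.

Fixpoint qb (Q : C) (N i : nat) : C :=
  match N, i with
  | O, O => RtoC 1
  | O, S _ => RtoC 0
  | S N', O => RtoC 1
  | S N', S i' => (qb Q N' i' + Q ^ (S i') * qb Q N' (S i'))%C
  end.

Fixpoint tri (n : nat) : nat := match n with O => O | S k => (tri k + k)%nat end.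

Lemma qb_0 Q N : qb Q N 0 = RtoC 1.
Proof. destruct N; auto. Qed.
Lemma qb_big Q N i : (N < i)%nat -> qb Q N i = RtoC 0.
Proof.
  revert i. induction N; intros i Hi; destruct i; try lia; simpl; auto.
  rewrite !IHN by lia. ring.
Qed.

Lemma cprod_shift f n : cprod f (S n) = (f O * cprod (fun i => f (S i)) n)%C.
Proof. induction n. simpl. ring. change (cprod f (S (S n))) with (cprod f (S n) * f (S n))%C. rewrite IHn. simpl. ring. Qed.

Lemma qbinom Q N x : cprod (fun i => 1 + x * Q ^ i)%C N = csum (fun i => qb Q N i * Q ^ (tri i) * x ^ i)%C (S N).
Proof.
  revert x. induction N; intros x.
  - simpl. ring.
  - rewrite cprod_shift. simpl (1 + x * Q ^ 0)%C.
    rewrite (cprod_ext _ (fun i => 1 + (x * Q) * Q ^ i)%C) by (intros; simpl; ring).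
    rewrite IHN.
    set (h := fun i => (qb Q N i * Q ^ tri i * (x * Q) ^ i)%C).
    change (csum (fun i => qb Q N i * Q ^ tri i * (x * Q) ^ i)%C (S N)) with (csum h (S N)).
    rewrite (csum_shift (fun i => qb Q (S N) i * Q ^ tri i * x ^ i)%C (S N)).
    rewrite (csum_ext (fun i => qb Q (S N) (S i) * Q ^ tri (S i) * x ^ S i)%C (fun i => h (S i) + x * h i)%C).
    2: { intros i _. unfold h. simpl qb. simpl tri. rewrite !Cpow_mult_l, !Cpow_add_r. simpl. ring. }
    rewrite csum_plus, csum_scal.
    assert (H0 : h (S N) = RtoC 0) by (unfold h; rewrite qb_big by lia; ring).
    assert (A : csum (fun i => h (S i)) (S N) = (csum h (S N) - h O)%C).
    { pose proof (csum_shift h (S N)) as E. change (csum h (S (S N))) with (csum h (S N) + h (S N))%C in E.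
      rewrite H0 in E. replace (csum h (S N)) with (csum h (S N) + RtoC 0)%C by ring. rewrite E. ring. }
    rewrite A. unfold h. rewrite !qb_0. simpl. ring.
Qed.

Definition Pq (Q : C) (m : nat) : C := cprod (fun k => 1 - Q ^ (S k))%C m.

Lemma Pq_S Q m : Pq Q (S m) = (Pq Q m * (1 - Q ^ (S m)))%C.
Proof. reflexivity. Qed.
Lemma Pq_0 Q : Pq Q 0 = RtoC 1.
Proof. reflexivity. Qed.

Lemma qb_closed Q N i : (i <= N)%nat -> (qb Q N i * Pq Q i * Pq Q (N - i) = Pq Q N)%C.
Proof.
  revert i. induction N; intros i Hi.
  - destruct i; [|lia]. simpl. rewrite Pq_0. ring.
  - destruct i.
    + rewrite qb_0. replace (S N - 0)%nat with (S N) by lia. rewrite Pq_0. ring.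
    + simpl qb. replace (S N - S i)%nat with (N - i)%nat by lia.
      destruct (Nat.eq_dec i N) as [E|E].
      * subst. rewrite (qb_big Q N (S N)) by lia. replace (N - N)%nat with O by lia.
        pose proof (IHN N (le_n _)) as I. replace (N - N)%nat with O in I by lia.
        rewrite Pq_S. transitivity ((qb Q N N * Pq Q N * Pq Q 0) * (1 - Q ^ S N))%C. rewrite Pq_0. ring. rewrite I. auto.
      * pose proof (IHN i ltac:(lia)) as I1. pose proof (IHN (S i) ltac:(lia)) as I2.
        set (m := (N - S i)%nat) in *.
        assert (Em : (N - i)%nat = S m) by (unfold m; lia).
        rewrite Em in *.
        rewrite Pq_S in I1. rewrite Pq_S in I2.
        rewrite !Pq_S.
        transitivity ((qb Q N i * Pq Q i * (Pq Q m * (1 - Q ^ S m))) * (1 - Q ^ S i)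
          + Q ^ S i * (qb Q N (S i) * (Pq Q i * (1 - Q ^ S i)) * Pq Q m) * (1 - Q ^ S m))%C.
        rewrite !Cpow_S. ring.
        rewrite I1, I2. rewrite <- Em.
        replace (Pq Q N * (1 - Q ^ S i) + Q ^ S i * Pq Q N * (1 - Q ^ (N - i)))%C
          with (Pq Q N * (1 - Q ^ (S i + (N - i))))%C by (rewrite Cpow_add_r; ring).
        replace (S i + (N - i))%nat with (S N) by lia. auto.
Qed.


Local Open Scope R_scope.

Lemma exp_low x r : 0 <= x <= r -> r < 1 -> exp (- (x / (1 - r))) <= 1 - x.
Proof.
  intros Hx Hr.
  assert (E : 1 + x / (1 - r) <= exp (x / (1 - r))) by apply exp_ineq1_le.
  assert (K : 1 <= (1 - x) * (1 + x / (1 - r))).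
  { replace ((1 - x) * (1 + x / (1 - r))) with (1 + x * (r - x) / (1 - r)) by (field; lra).
    assert (0 <= x * (r - x) / (1 - r)). apply Rdiv_le_0_compat. nra. lra. lra. }
  assert (K2 : 1 <= (1 - x) * exp (x / (1 - r))).
  { eapply Rle_trans. exact K. apply Rmult_le_compat_l; lra. }
  rewrite exp_Ropp. apply Rmult_le_reg_r with (exp (x / (1 - r))). apply exp_pos.
  rewrite Rinv_l. lra. apply Rgt_not_eq, exp_pos.
Qed.

Lemma prod_lower f a r n : (forall k, Cmod (f k - 1)%C <= a k) -> (forall k, 0 <= a k <= r) -> r < 1 ->
  exp (- (rsum a n / (1 - r))) <= Cmod (cprod f n).
Proof.
  intros Hf Ha Hr. induction n; simpl.
  - rewrite Cmod_1. unfold Rdiv. rewrite Rmult_0_l, Ropp_0, exp_0. lra.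
  - rewrite Cmod_mult.
    replace (- ((rsum a n + a n) / (1 - r))) with (- (rsum a n / (1 - r)) + - (a n / (1 - r))) by (field; lra).
    rewrite exp_plus. apply Rmult_le_compat. left; apply exp_pos. left; apply exp_pos. auto.
    eapply Rle_trans. apply exp_low. apply Ha. auto.
    pose proof (Cmod_sub_ge 1 (1 - f n)%C). replace (1 - (1 - f n))%C with (f n) in H by ring.
    rewrite Cmod_1, Cmod_sub_sym in H. specialize (Hf n). lra.
Qed.

Lemma prod_upper f a n : (forall k, Cmod (f k - 1)%C <= a k) -> Cmod (cprod f n) <= exp (rsum a n).
Proof.
  intros Hf. induction n; simpl.
  - rewrite Cmod_1, exp_0. lra.
  - rewrite Cmod_mult, exp_plus. apply Rmult_le_compat. apply Cmod_ge_0. apply Cmod_ge_0. auto.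
    eapply Rle_trans. 2: apply exp_ineq1_le.
    replace (f n) with ((f n - 1) + 1)%C by ring. eapply Rle_trans. apply Cmod_triangle. rewrite Cmod_1.
    specialize (Hf n). lra.
Qed.

Lemma rsum_geom_le a r n : 0 <= r < 1 -> (forall k, a k <= r ^ k) -> rsum a n <= 1 / (1 - r).
Proof. intros. eapply Rle_trans. apply rsum_le with (g := fun k => r ^ k). auto. apply geom_partial. auto. Qed.


Local Open Scope R_scope.

Lemma cprod_app f m n : cprod f (m + n) = (cprod f m * cprod (fun i => f (m + i)%nat) n)%C.
Proof. induction n; simpl. rewrite Nat.add_0_r. ring. rewrite Nat.add_succ_r. simpl. rewrite IHn. ring. Qed.
Lemma cprod_rev f n : cprod f n = cprod (fun i => f (n - 1 - i)%nat) n.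
Proof.
  induction n. auto. change (cprod f (S n)) with (cprod f n * f n)%C. rewrite cprod_shift. rewrite IHn.
  replace (S n - 1 - 0)%nat with n by lia. rewrite Cmult_comm. f_equal.
  apply cprod_ext. intros. f_equal. lia.
Qed.
Lemma cprod_mult f g n : cprod (fun i => f i * g i)%C n = (cprod f n * cprod g n)%C.
Proof. induction n; simpl. ring. rewrite IHn. ring. Qed.

Lemma tri2 m : (2 * tri m + m = m * m)%nat.
Proof. induction m; simpl; lia. Qed.

Lemma qw_cancel q a : q <> RtoC 0 -> (q ^ a * (/ q) ^ a)%C = RtoC 1.
Proof. intros. rewrite <- Cpow_mult_l. rewrite Cinv_r by auto. apply Cpow_1_l. Qed.

Lemma qw_exp q A B Cc : q <> RtoC 0 -> A = (B + Cc)%nat -> (q ^ A * (/ q) ^ B)%C = (q ^ Cc)%C.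
Proof. intros Hq E. subst. rewrite Cpow_add_r. rewrite (Cmult_comm (q ^ B)). rewrite <- Cmult_assoc, qw_cancel by auto. ring. Qed.

Lemma sig_pow2 (s : C) k : (s * s = 1)%C -> (s ^ (2 * k) = 1)%C.
Proof. intros H. rewrite Cpow_mult_r. simpl. rewrite Cmult_1_r, H. apply Cpow_1_l. Qed.

Lemma sig_pow_even (s : C) k m : (s * s = 1)%C -> (s ^ (2 * k + m) = s ^ m)%C.
Proof. intros H. rewrite Cpow_add_r, sig_pow2 by auto. ring. Qed.

Lemma qw_exp2 q A Cc : q <> RtoC 0 -> (q ^ A * (/ q) ^ (A + Cc))%C = ((/ q) ^ Cc)%C.
Proof. intros Hq. rewrite Cpow_add_r. rewrite Cmult_assoc, qw_cancel by auto. ring. Qed.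

Definition acp (q s : C) (n : nat) : C := cprod (fun k => 1 + s * q ^ (2 * k + 1))%C n.

Lemma prod_sw (s w : C) n : cprod (fun k => s * w ^ (2 * k + 1))%C n = (s ^ n * w ^ (n * n))%C.
Proof.
  induction n. simpl. ring.
  change (cprod (fun k => s * w ^ (2 * k + 1))%C (S n)) with (cprod (fun k => s * w ^ (2 * k + 1))%C n * (s * w ^ (2 * n + 1)))%C.
  rewrite IHn.
  replace (S n * S n)%nat with (n * n + (2 * n + 1))%nat by lia. rewrite (Cpow_add_r w (n * n)), (Cpow_S s n). ring.
Qed.

Lemma tp_left q s n : q <> RtoC 0 -> (s * s = 1)%C ->
  cprod (fun i => 1 + (s * q * (/ q) ^ (2 * n)) * (q * q) ^ i)%C (2 * n) = (s ^ n * (/ q) ^ (n * n) * (acp q s n * acp q s n))%C.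
Proof.
  intros Hq Hs.
  replace (cprod _ (2 * n)) with (cprod (fun i => 1 + (s * q * (/ q) ^ (2 * n)) * (q * q) ^ i)%C (n + n)) by (f_equal; lia).
  rewrite cprod_app.
  assert (E2 : cprod (fun i => 1 + (s * q * (/ q) ^ (2 * n)) * (q * q) ^ (n + i))%C n = acp q s n).
  { apply cprod_ext. intros i _. f_equal. rewrite Cpow_mult_l, !Cpow_add_r.
    transitivity (s * (q ^ n * q ^ n * (/ q) ^ (2 * n)) * (q * q ^ i * q ^ i))%C. ring.
    replace (q ^ n * q ^ n)%C with (q ^ (2 * n))%C by (rewrite <- Cpow_add_r; f_equal; lia).
    rewrite qw_cancel by auto. replace (2 * i)%nat with (i + i)%nat by lia. rewrite Cpow_add_r. ring. }
  rewrite E2. rewrite cprod_rev.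
  assert (E1 : forall i, (i < n)%nat -> (1 + (s * q * (/ q) ^ (2 * n)) * (q * q) ^ (n - 1 - i))%C
                 = ((s * (/ q) ^ (2 * i + 1)) * (1 + s * q ^ (2 * i + 1)))%C).
  { intros i Hi. rewrite Cpow_mult_l.
    transitivity (1 + s * (q ^ (1 + (n - 1 - i) + (n - 1 - i)) * (/ q) ^ ((1 + (n - 1 - i) + (n - 1 - i)) + (2 * i + 1))))%C.
    replace (1 + (n - 1 - i) + (n - 1 - i) + (2 * i + 1))%nat with (2 * n)%nat by lia.
    rewrite !Cpow_add_r. simpl (q ^ 1)%C. ring.
    rewrite qw_exp2 by auto.
    replace (s * (/ q) ^ (2 * i + 1) * (1 + s * q ^ (2 * i + 1)))%C
      with (s * (/ q) ^ (2 * i + 1) + (s * s) * (q ^ (2 * i + 1) * (/ q) ^ (2 * i + 1)))%C by ring.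
    rewrite Hs, qw_cancel by auto. ring. }
  rewrite (cprod_ext _ _ n E1). rewrite cprod_mult, prod_sw. unfold acp. ring.
Qed.

Lemma tp_right_terms q s n j : q <> RtoC 0 -> (s * s = 1)%C ->
  (s ^ n * q ^ (n * n) * (qb (q * q) (2 * n) (n + j) * (q * q) ^ tri (n + j) * (s * q * (/ q) ^ (2 * n)) ^ (n + j)))%C
  = (qb (q * q) (2 * n) (n + j) * s ^ j * q ^ (j * j))%C.
Proof.
  intros Hq Hs. rewrite !Cpow_mult_l.
  transitivity (qb (q * q) (2 * n) (n + j) * (s ^ (n + (n + j))) * (q ^ (n * n + tri (n + j) + tri (n + j) + (n + j)) * (/ q) ^ (2 * n * (n + j))))%C.
  rewrite <- Cpow_mult_r. rewrite !Cpow_add_r. rewrite Nat.mul_add_distr_l. rewrite !Cpow_add_r. ring.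
  replace (n + (n + j))%nat with (2 * n + j)%nat by lia.
  rewrite sig_pow_even by auto. rewrite (qw_exp q _ (2 * n * (n + j)) (j * j)) by (auto; pose proof (tri2 (n + j)); nia). ring.
Qed.

Lemma tp_left_terms q s n j : q <> RtoC 0 -> (s * s = 1)%C -> (j < n)%nat ->
  (s ^ n * q ^ (n * n) * (qb (q * q) (2 * n) (n - 1 - j) * (q * q) ^ tri (n - 1 - j) * (s * q * (/ q) ^ (2 * n)) ^ (n - 1 - j)))%C
  = (qb (q * q) (2 * n) (n - 1 - j) * s ^ (S j) * q ^ (S j * S j))%C.
Proof.
  intros Hq Hs Hj. set (k := (n - 1 - j)%nat). assert (Hn : n = (k + j + 1)%nat) by (unfold k; lia).
  rewrite !Cpow_mult_l.
  transitivity (qb (q * q) (2 * n) k * (s ^ (n + k)) * (q ^ (n * n + tri k + tri k + k) * (/ q) ^ (2 * n * k)))%C.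
  rewrite <- Cpow_mult_r. rewrite !Cpow_add_r. ring.
  replace (n + k)%nat with (2 * k + S j)%nat by lia.
  rewrite sig_pow_even by auto. rewrite (qw_exp q _ (2 * n * k) (S j * S j)). ring. auto.
  pose proof (tri2 k). rewrite Hn. nia.
Qed.

Lemma tp_finite q s n : q <> RtoC 0 -> (s * s = 1)%C ->
  (acp q s n * acp q s n)%C =
  (csum (fun j => qb (q * q) (2 * n) (n + j) * s ^ j * q ^ (j * j)) (S n)
   + csum (fun j => qb (q * q) (2 * n) (n - 1 - j) * s ^ (S j) * q ^ (S j * S j)) n)%C.
Proof.
  intros Hq Hs.
  pose proof (qbinom (q * q) (2 * n) (s * q * (/ q) ^ (2 * n))%C) as QB.
  rewrite tp_left in QB by auto.
  set (t := fun i => (qb (q * q) (2 * n) i * (q * q) ^ tri i * (s * q * (/ q) ^ (2 * n)) ^ i)%C) in QB.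
  assert (K : (s ^ n * q ^ (n * n) * (s ^ n * (/ q) ^ (n * n)))%C = RtoC 1).
  { transitivity (s ^ (2 * n) * (q ^ (n * n) * (/ q) ^ (n * n)))%C.
    replace (2 * n)%nat with (n + n)%nat by lia. rewrite Cpow_add_r. ring.
    rewrite sig_pow2, qw_cancel by auto. ring. }
  transitivity (s ^ n * q ^ (n * n) * csum t (S (2 * n)))%C.
  { rewrite <- QB. rewrite Cmult_assoc, K. ring. }
  replace (S (2 * n)) with (n + S n)%nat by lia. rewrite csum_app, csum_rev.
  rewrite Cmult_plus_distr_l, <- !csum_scal. rewrite Cplus_comm. f_equal.
  - apply csum_ext. intros j _. unfold t. apply tp_right_terms; auto.
  - apply csum_ext. intros j Hj. unfold t. apply tp_left_terms; auto.
Qed.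


Local Open Scope R_scope.

Lemma exp_mono x y : x <= y -> exp x <= exp y.
Proof. intros [H|H]. left. apply exp_increasing; auto. subst; lra. Qed.

Lemma cv_ge u l c : cv u l -> (forall n, c <= Cmod (u n)) -> c <= Cmod l.
Proof.
  intros H Hc. apply Rnot_lt_le. intros Hlt.
  destruct (H (c - Cmod l) ltac:(lra)) as [N HN]. specialize (HN N (le_n _)). specialize (Hc N).
  pose proof (Cmod_sub_ge (u N) l). lra.
Qed.

Lemma Sv_finite u m : (forall i, (m <= i)%nat -> u i = RtoC 0) -> Sv u = csum u m.
Proof.
  intros H. apply Sv_eq. intros e He. exists m. intros n Hn. rewrite (csum_tail0 u m n H Hn).
  replace (csum u m - csum u m)%C with (RtoC 0) by ring. rewrite Cmod_0. lra.
Qed.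

Lemma cv_pow0 (Q : C) c : Cmod Q < 1 -> cv (fun m => Q ^ (m + c))%C (RtoC 0).
Proof.
  intros HQ e He. destruct (pow_lt_1_zero (Cmod Q) ltac:(rewrite Rabs_right; [lra|apply Rle_ge, Cmod_ge_0]) e He) as [N HN].
  exists N. intros n Hn. replace (Q ^ (n + c) - 0)%C with (Q ^ (n + c))%C by ring.
  rewrite Cmod_pow. specialize (HN (n + c)%nat ltac:(lia)). rewrite Rabs_right in HN. auto.
  apply Rle_ge, pow_le, Cmod_ge_0.
Qed.

Lemma Cmult_reg (a b c : C) : c <> RtoC 0 -> (a * c = b * c)%C -> a = b.
Proof. intros Hc H. replace a with (a * c / c)%C by (field; auto). rewrite H. field; auto. Qed.

Section Main.
Variable q : C.
Hypothesis Hq0 : q <> RtoC 0.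
Hypothesis Hq1 : Cmod q < 1.

Let Q := (q * q)%C.
Let rho := Cmod q.
Let r2 := (rho * rho)%R.
Let LP := exp (- ((1 / (1 - r2)) / (1 - r2))).
Let UP := exp (1 / (1 - r2)).

Lemma rho_pos : 0 < rho.
Proof. apply Cmod_gt_0. auto. Qed.
Lemma r2_bd : 0 < r2 < 1.
Proof. unfold r2. pose proof rho_pos. unfold rho in *. nra. Qed.
Lemma CmodQ : Cmod Q = r2.
Proof. unfold Q, r2, rho. apply Cmod_mult. Qed.

Lemma P_bounds m : LP <= Cmod (Pq Q m) <= UP.
Proof.
  pose proof r2_bd.
  assert (Hf : forall k, Cmod ((fun k => 1 - Q ^ S k)%C k - 1)%C <= r2 ^ S k).
  { intros k. simpl. replace (1 - Q * Q ^ k - 1)%C with (- (Q ^ S k))%C by (simpl; ring).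
    rewrite Cmod_opp, Cmod_pow, CmodQ. right; auto. }
  assert (Hs : rsum (fun k => r2 ^ S k) m <= 1 / (1 - r2)).
  { apply rsum_geom_le. lra. intros k. apply pow_decr; lia || lra. }
  split.
  - unfold LP. eapply Rle_trans. 2: apply (prod_lower _ (fun k => r2 ^ S k) r2 m Hf).
    apply exp_mono. apply Ropp_le_contravar. unfold Rdiv. apply Rmult_le_compat_r. left; apply Rinv_0_lt_compat; lra.
    unfold Rdiv in Hs. lra.
    intros k. split. apply pow_le; lra. simpl. pose proof (pow_le_1 r2 k ltac:(lra)). pose proof (pow_le r2 k ltac:(lra)). nra. lra.
  - unfold UP. eapply Rle_trans. apply (prod_upper _ (fun k => r2 ^ S k) m Hf). apply exp_mono. auto.
Qed.

Lemma LP_pos : 0 < LP.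
Proof. apply exp_pos. Qed.

Lemma P_nz m : Pq Q m <> RtoC 0.
Proof. intros E. pose proof (P_bounds m). rewrite E, Cmod_0 in H. pose proof LP_pos. lra. Qed.

Lemma qb_sym N i : (i <= N)%nat -> qb Q N i = qb Q N (N - i).
Proof.
  intros H. pose proof (qb_closed Q N i H) as A. pose proof (qb_closed Q N (N - i) ltac:(lia)) as B.
  replace (N - (N - i))%nat with i in B by lia.
  pose proof (P_nz i). pose proof (P_nz (N - i)).
  apply (Cmult_reg _ _ (Pq Q i * Pq Q (N - i))%C). apply Cmult_neq_0; auto.
  rewrite Cmult_assoc, A. rewrite <- B. ring.
Qed.

Lemma qb_closed' N i : (i <= N)%nat -> qb Q N i = (Pq Q N / (Pq Q i * Pq Q (N - i)))%C.
Proof.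
  intros H. rewrite <- (qb_closed Q N i H). field. split; apply P_nz.
Qed.

Lemma qbn_nz n : qb Q (2 * n) n <> RtoC 0.
Proof.
  intros E. apply (P_nz (2 * n)). rewrite <- (qb_closed Q (2 * n) n) by lia. rewrite E. ring.
Qed.

Definition rr (n j : nat) : C := (qb Q (2 * n) (n + j) / qb Q (2 * n) n)%C.

Lemma rr_closed n j : (j <= n)%nat -> rr n j = (Pq Q n * Pq Q n / (Pq Q (n + j) * Pq Q (n - j)))%C.
Proof.
  intros H. unfold rr. rewrite !qb_closed' by lia.
  replace (2 * n - (n + j))%nat with (n - j)%nat by lia. replace (2 * n - n)%nat with n by lia.
  field. repeat split; apply P_nz.
Qed.

Let M := (UP * UP / (LP * LP))%R.

Lemma rr_bound n j : (j <= n)%nat -> Cmod (rr n j) <= M.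
Proof.
  intros H. rewrite rr_closed by auto.
  assert (N1 : Pq Q (n + j) <> RtoC 0) by apply P_nz. assert (N2 : Pq Q (n - j) <> RtoC 0) by apply P_nz.
  rewrite Cmod_div by (apply Cmult_neq_0; auto). rewrite !Cmod_mult.
  pose proof (P_bounds n). pose proof (P_bounds (n + j)). pose proof (P_bounds (n - j)). pose proof LP_pos.
  unfold M. apply Rmult_le_compat. apply Rmult_le_pos; apply Cmod_ge_0. left; apply Rinv_0_lt_compat. nra.
  apply Rmult_le_compat; try apply Cmod_ge_0; lra.
  apply Rinv_le_contravar. nra. apply Rmult_le_compat; lra.
Qed.

Definition EE (m j : nat) : C := cprod (fun k => 1 - Q ^ (m + k + 1))%C j.

Lemma P_split m j : Pq Q (m + j) = (Pq Q m * EE m j)%C.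
Proof. unfold Pq, EE. rewrite cprod_app. f_equal. apply cprod_ext. intros. f_equal. f_equal. lia. Qed.

Lemma EE_cv j : cv (fun m => EE m j) (RtoC 1).
Proof.
  induction j. unfold EE. simpl. apply cv_const.
  assert (H : cv (fun m => EE m j * (1 - Q ^ (m + j + 1)))%C (RtoC 1 * (RtoC 1 - RtoC 0))%C).
  { apply cv_mult. auto. apply cv_minus. apply cv_const.
    eapply cv_ext. 2: apply (cv_pow0 Q (j + 1)). intros m. simpl. f_equal. lia. rewrite CmodQ. pose proof r2_bd. lra. }
  replace (RtoC 1 * (RtoC 1 - RtoC 0))%C with (RtoC 1) in H by ring.
  eapply cv_ext. 2: exact H. intros m. reflexivity.
Qed.

Lemma rr_cv j : cv (fun n => rr n j) (RtoC 1).
Proof.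
  apply cv_ext_ev with (u := fun n => (EE (n - j) j / EE n j)%C) (N0 := j).
  { intros n Hn. rewrite rr_closed by auto. rewrite (P_split n j).
    replace (Pq Q n) with (Pq Q (n - j + j)) by (f_equal; lia). rewrite (P_split (n - j) j).
    replace (n - j + j)%nat with n by lia.
    assert (Pq Q n <> RtoC 0) by apply P_nz. assert (Pq Q (n - j) <> RtoC 0) by apply P_nz.
    assert (EE n j <> RtoC 0). { intros E. apply (P_nz (n + j)). rewrite P_split, E. ring. }
    assert (EE (n - j) j <> RtoC 0). { intros E. apply (P_nz n). replace n with (n - j + j)%nat by lia. rewrite P_split, E. ring. }
    field. auto. }
  assert (H : cv (fun n => EE (n - j) j / EE n j)%C (RtoC 1 / RtoC 1)%C).
  { apply cv_div. apply cv_shift_back with j. eapply cv_ext. 2: apply (EE_cv j). intros. simpl. f_equal. lia.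
    apply EE_cv. apply C1_nz. }
  replace (RtoC 1 / RtoC 1)%C with (RtoC 1) in H by (field; apply C1_nz). exact H.
Qed.

Definition gn (s : C) (n j : nat) : C := if (j <=? n)%nat then (rr n j * s ^ j * q ^ (j * j))%C else RtoC 0.

Lemma acp_ratio s n : (s * s = 1)%C ->
  (acp q s n * acp q s n / qb Q (2 * n) n)%C = (Sv (gn s n) + Sv (fun j => gn s n (S j)))%C.
Proof.
  intros Hs. rewrite (Sv_finite (gn s n) (S n)).
  2: { intros i Hi. unfold gn. destruct (Nat.leb_spec i n). lia. auto. }
  rewrite (Sv_finite (fun j => gn s n (S j)) n).
  2: { intros i Hi. unfold gn. destruct (Nat.leb_spec (S i) n). lia. auto. }
  rewrite tp_finite by auto. fold Q.
  unfold Cdiv. rewrite Cmult_plus_distr_r. rewrite !(Cmult_comm _ (/ qb Q (2 * n) n)), <- !csum_scal.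
  f_equal; apply csum_ext; intros j Hj; unfold gn.
  - destruct (Nat.leb_spec j n); [|lia]. unfold rr. unfold Cdiv. ring.
  - destruct (Nat.leb_spec (S j) n); [|lia]. unfold rr. rewrite (qb_sym (2 * n) (n - 1 - j)) by lia.
    replace (2 * n - (n - 1 - j))%nat with (n + S j)%nat by lia. unfold Cdiv. ring.
Qed.

Lemma gn_bound s n j : Cmod s = 1 -> Cmod (gn s n j) <= M * rho ^ j.
Proof.
  intros Hs. pose proof rho_pos.
  assert (0 <= M). { unfold M. pose proof LP_pos. apply Rmult_le_pos. apply Rmult_le_pos; left; apply exp_pos.
    left; apply Rinv_0_lt_compat; nra. }
  unfold gn. destruct (Nat.leb_spec j n).
  - rewrite !Cmod_mult, !Cmod_pow, Hs, pow1, Rmult_1_r. fold rho.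
    apply Rmult_le_compat. apply Cmod_ge_0. apply pow_le; lra. apply rr_bound; auto.
    apply pow_decr. unfold rho; split. apply Cmod_ge_0. lra. nia.
  - rewrite Cmod_0. apply Rmult_le_pos; auto. apply pow_le; lra.
Qed.

Lemma gn_cv s j : cv (fun n => gn s n j) (s ^ j * q ^ (j * j))%C.
Proof.
  apply cv_ext_ev with (u := fun n => (rr n j * (s ^ j * q ^ (j * j)))%C) (N0 := j).
  { intros n Hn. unfold gn. destruct (Nat.leb_spec j n); [|lia]. ring. }
  assert (H : cv (fun n => (rr n j * (s ^ j * q ^ (j * j)))%C) (RtoC 1 * (s ^ j * q ^ (j * j)))%C).
  { apply cv_mult. apply rr_cv. apply cv_const. }
  replace (RtoC 1 * (s ^ j * q ^ (j * j)))%C with (s ^ j * q ^ (j * j))%C in H by ring. exact H.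
Qed.

Definition Theta (s : C) : C := (Sv (fun j => s ^ j * q ^ (j * j)) + Sv (fun j => s ^ (S j) * q ^ (S j * S j)))%C.

Lemma acp_cv s : (s * s = 1)%C -> Cmod s = 1 -> cv (fun n => acp q s n * acp q s n / qb Q (2 * n) n)%C (Theta s).
Proof.
  intros Hs Hm. pose proof rho_pos.
  assert (HM : 0 <= M). { unfold M. pose proof LP_pos. apply Rmult_le_pos. apply Rmult_le_pos; left; apply exp_pos.
    left; apply Rinv_0_lt_compat; apply Rmult_lt_0_compat; apply LP_pos. }
  assert (Hr : 0 <= rho < 1) by (split; [apply Cmod_ge_0 | exact Hq1]).
  eapply cv_ext. intros n. symmetry. apply acp_ratio. auto.
  apply cv_plus.
  - apply tannery with (C0 := M) (t := rho); auto. intros. apply gn_bound; auto. intros. apply gn_cv.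
  - apply tannery with (C0 := M) (t := rho); auto. intros. eapply Rle_trans. apply gn_bound; auto.
    apply Rmult_le_compat_l; auto. apply pow_decr; auto; lra. intros. apply gn_cv.
Qed.

Lemma sg_nat b j : sg b (Z.of_nat j) = (sgv b ^ j)%C.
Proof.
  induction j. unfold sg, sgv. destruct b; simpl; auto.
  rewrite Nat2Z.inj_succ, <- Z.add_1_r, <- sg_add, IHj. rewrite Cpow_S.
  replace (sg b 1) with (sgv b) by (unfold sg, sgv; destruct b; auto). ring.
Qed.

Lemma Theta_th b : Theta (sgv b) = th q b.
Proof.
  unfold Theta, th, ZS. f_equal; apply Sv_ext; intros j.
  - rewrite sg_nat. f_equal. f_equal. apply Nat2Z.inj. rewrite Z2Nat.id by apply Z.square_nonneg. lia.
  - replace (- Z.of_nat j - 1)%Z with (- Z.of_nat (S j))%Z by lia.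
    replace (sg b (- Z.of_nat (S j))) with (sg b (Z.of_nat (S j))).
    rewrite sg_nat. f_equal. f_equal. apply Nat2Z.inj. rewrite Z2Nat.id by apply Z.square_nonneg. lia.
    unfold sg. destruct b; auto; rewrite Z.even_opp; auto.
Qed.

Let rhoL := exp (- ((1 / (1 - rho)) / (1 - rho))).

Lemma acp_lower s n : Cmod s = 1 -> rhoL <= Cmod (acp q s n).
Proof.
  intros Hs. pose proof rho_pos. assert (Hr : rho < 1) by (unfold rho; lra).
  assert (Hf : forall k, Cmod ((fun k => 1 + s * q ^ (2 * k + 1))%C k - 1)%C <= rho ^ (2 * k + 1)).
  { intros k. cbv beta. replace (1 + s * q ^ (2 * k + 1) - 1)%C with (s * q ^ (2 * k + 1))%C by ring.
    rewrite Cmod_mult, Hs, Cmod_pow. fold rho. lra. }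
  unfold rhoL, acp. eapply Rle_trans. 2: apply (prod_lower _ (fun k => rho ^ (2 * k + 1)) rho n Hf).
  apply exp_mono. apply Ropp_le_contravar. unfold Rdiv. apply Rmult_le_compat_r. left; apply Rinv_0_lt_compat; lra.
  assert (rsum (fun k => rho ^ (2 * k + 1)) n <= 1 / (1 - rho)).
  { apply rsum_geom_le. lra. intros. apply pow_decr; lra || lia. } unfold Rdiv in H0. lra.
  intros k. split. apply pow_le; lra. replace (2 * k + 1)%nat with (S (2 * k)) by lia.
  change (rho ^ S (2 * k)) with (rho * rho ^ (2 * k)).
  pose proof (pow_le_1 rho (2 * k) ltac:(lra)). apply Rle_trans with (rho * 1). apply Rmult_le_compat_l; lra. lra. lra.
Qed.

Theorem main_limit : th q true <> RtoC 0 /\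
  cv (fun n => (acp q (RtoC (-1)) n * acp q (RtoC (-1)) n) / (acp q (RtoC 1) n * acp q (RtoC 1) n))%C (th q false / th q true)%C.
Proof.
  assert (S1 : (sgv true * sgv true = 1)%C) by (simpl; ring).
  assert (S2 : (sgv false * sgv false = 1)%C) by (apply injective_projections; simpl; ring).
  assert (M1 : Cmod (sgv true) = 1) by apply Cmod_1.
  assert (M2 : Cmod (sgv false) = 1) by (simpl; rewrite Cmod_R, Rabs_left; lra).
  pose proof (acp_cv _ S1 M1) as C1. pose proof (acp_cv _ S2 M2) as C2.
  rewrite Theta_th in C1, C2. change (sgv true) with (RtoC 1) in *. change (sgv false) with (RtoC (-1)) in *.
  assert (NZ : th q true <> RtoC 0).
  { set (c := (rhoL * rhoL / (UP / (LP * LP)))%R).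
    assert (Hc : 0 < c). { unfold c, rhoL. pose proof LP_pos. apply Rdiv_lt_0_compat. apply Rmult_lt_0_compat; apply exp_pos.
      apply Rdiv_lt_0_compat. apply exp_pos. nra. }
    assert (c <= Cmod (th q true)).
    { apply (cv_ge _ _ _ C1). intros n.
      assert (Hqb : Cmod (qb Q (2 * n) n) <= UP / (LP * LP)).
      { rewrite qb_closed' by lia. replace (2 * n - n)%nat with n by lia.
        rewrite Cmod_div by (apply Cmult_neq_0; apply P_nz). rewrite Cmod_mult.
        pose proof (P_bounds (2 * n)). pose proof (P_bounds n). pose proof LP_pos.
        unfold Rdiv. apply Rmult_le_compat. apply Cmod_ge_0. left; apply Rinv_0_lt_compat. nra. lra.
        apply Rinv_le_contravar. nra. apply Rmult_le_compat; lra. }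
      rewrite Cmod_div by apply qbn_nz. rewrite Cmod_mult.
      pose proof (acp_lower (RtoC 1) n M1). assert (0 < rhoL) by apply exp_pos.
      pose proof (Cmod_gt_0 (qb Q (2 * n) n)) as [G _]. specialize (G (qbn_nz n)).
      unfold c. unfold Rdiv at 2. apply Rmult_le_compat. nra. left; apply Rinv_0_lt_compat. pose proof LP_pos.
      apply Rdiv_lt_0_compat. apply exp_pos. nra. apply Rmult_le_compat; lra.
      apply Rinv_le_contravar; auto. }
    intros E. rewrite E, Cmod_0 in H. lra. }
  split; auto.
  eapply cv_ext. 2: apply (cv_div _ _ _ _ C2 C1 NZ).
  intros n. simpl. field. repeat split; try apply qbn_nz.
  intros E. pose proof (acp_lower (RtoC 1) n M1). rewrite E, Cmod_0 in H.
  assert (0 < rhoL) by apply exp_pos. lra.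
Qed.
End Main.


Local Open Scope R_scope.

Lemma lim_cv (u : nat -> C) l : cv u l ->
  @lim (CompleteNormedModule.CompleteSpace _ C_CompleteNormedModule) (filtermap u eventually) = l.
Proof.
  intros H.
  set (F := filtermap u eventually).
  assert (PF : ProperFilter F) by (apply filtermap_proper_filter; apply eventually_filter).
  assert (CF : cauchy F).
  { intros eps. exists l. destruct (H eps (cond_pos eps)) as [N HN]. exists N. intros n Hn.
    apply C_NormedModule_mixin_compat1. apply HN. lia. }
  pose proof (@complete_cauchy (CompleteNormedModule.CompleteSpace _ C_CompleteNormedModule) F PF CF) as CC.
  set (L := @lim (CompleteNormedModule.CompleteSpace _ C_CompleteNormedModule) F) in *.
  assert (K : forall e, 0 < e -> Cmod (L - l)%C <= (1 + sqrt 2) * e).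
  { intros e He. destruct (CC (mkposreal e He)) as [N1 H1]. destruct (H e He) as [N2 H2].
    specialize (H1 (max N1 N2) ltac:(lia)). specialize (H2 (max N1 N2) ltac:(lia)).
    apply C_NormedModule_mixin_compat2 in H1.
    pose proof (Cmod_tri3 L l (u (max N1 N2))).
    assert (H1' : Cmod (L - u (max N1 N2))%C < sqrt 2 * e).
    { rewrite Cmod_sub_sym. exact H1. }
    lra. }
  assert (Z : Cmod (L - l)%C = 0).
  { apply Rle_antisym. 2: apply Cmod_ge_0. apply Rnot_lt_le. intros Hp.
    assert (S2 : 0 < 1 + sqrt 2) by (pose proof (sqrt_pos 2); lra).
    specialize (K (Cmod (L - l)%C / (2 * (1 + sqrt 2))) ltac:(apply Rdiv_lt_0_compat; lra)).
    assert (E : (1 + sqrt 2) * (Cmod (L - l)%C / (2 * (1 + sqrt 2))) = Cmod (L - l)%C / 2).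
    { field. lra. }
    lra. }
  apply Cmod_eq_0 in Z. change (@eq C L l). replace L with ((L - l) + l)%C by ring. rewrite Z. ring.
Qed.

Lemma qpow_add tau a b : qpow tau (a + b) = (qpow tau a * qpow tau b)%C.
Proof.
  unfold qpow. apply injective_projections; simpl.
  - replace (-2 * PI * (a + b) * Im tau) with (-2 * PI * a * Im tau + -2 * PI * b * Im tau) by ring.
    replace (2 * PI * (a + b) * Re tau) with (2 * PI * a * Re tau + 2 * PI * b * Re tau) by ring.
    rewrite exp_plus, cos_plus. ring.
  - replace (-2 * PI * (a + b) * Im tau) with (-2 * PI * a * Im tau + -2 * PI * b * Im tau) by ring.
    replace (2 * PI * (a + b) * Re tau) with (2 * PI * a * Re tau + 2 * PI * b * Re tau) by ring.
    rewrite exp_plus, sin_plus. ring.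
Qed.

Lemma qpow_0 tau : qpow tau 0 = RtoC 1.
Proof.
  unfold qpow. replace (-2 * PI * 0 * Im tau) with 0 by ring. replace (2 * PI * 0 * Re tau) with 0 by ring.
  rewrite exp_0, cos_0, sin_0. apply injective_projections; simpl; ring.
Qed.

Lemma qpow_nat tau k r : qpow tau (INR k * r) = (qpow tau r ^ k)%C.
Proof.
  induction k. simpl. rewrite Rmult_0_l. apply qpow_0.
  rewrite S_INR. replace ((INR k + 1) * r) with (INR k * r + r) by ring.
  rewrite qpow_add, IHk. simpl. ring.
Qed.

Lemma Cmod_qpow_eq tau r : Cmod (qpow tau r) = exp (-2 * PI * r * Im tau).
Proof.
  unfold qpow, Cmod. simpl.
  replace (exp (-2 * PI * r * Im tau) * cos (2 * PI * r * Re tau) * (exp (-2 * PI * r * Im tau) * cos (2 * PI * r * Re tau) * 1) +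
     exp (-2 * PI * r * Im tau) * sin (2 * PI * r * Re tau) * (exp (-2 * PI * r * Im tau) * sin (2 * PI * r * Re tau) * 1))
   with (Rsqr (exp (-2 * PI * r * Im tau)) * (Rsqr (sin (2 * PI * r * Re tau)) + Rsqr (cos (2 * PI * r * Re tau)))) by (unfold Rsqr; ring).
  rewrite sin2_cos2, Rmult_1_r. apply sqrt_Rsqr. left; apply exp_pos.
Qed.

Lemma qpow_double tau r : qpow (RtoC 2 * tau)%C r = qpow tau (2 * r).
Proof.
  unfold qpow. destruct tau as [a b]. unfold Re, Im. simpl.
  replace (2 * b + 0 * a) with (2 * b) by ring. replace (2 * a - 0 * b) with (2 * a) by ring.
  replace (-2 * PI * r * (2 * b)) with (-2 * PI * (2 * r) * b) by ring.
  replace (2 * PI * r * (2 * a)) with (2 * PI * (2 * r) * a) by ring. auto.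
Qed.

Lemma bpartial_prod tau N : bpartial tau N = cprod (fun k => bfactor tau (S k)) N.
Proof. induction N; simpl; auto. rewrite IHN. auto. Qed.

Lemma p_bounds tau : 0 < Im tau -> qpow tau (/ 4) <> RtoC 0 /\ Cmod (qpow tau (/ 4)) < 1.
Proof.
  intros H. pose proof (Cmod_qpow_eq tau (/ 4)) as E. split.
  - apply Cmod_gt_0. rewrite E. apply exp_pos.
  - rewrite E. rewrite <- exp_0. apply exp_increasing. pose proof PI_RGT_0. nra.
Qed.

Lemma one_plus_nz x : Cmod x < 1 -> (1 + x)%C <> RtoC 0.
Proof. intros H E. pose proof (Cmod_plus_ge 1 x). rewrite E, Cmod_0, Cmod_1 in H0. lra. Qed.

Lemma cprod_S f n : cprod f (S n) = (cprod f n * f n)%C.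
Proof. reflexivity. Qed.

Lemma bpartial_acp tau N : 0 < Im tau ->
  bpartial tau N = ((acp (qpow tau (/ 4)) (RtoC (-1)) N * acp (qpow tau (/ 4)) (RtoC (-1)) N) /
                    (acp (qpow tau (/ 4)) (RtoC 1) N * acp (qpow tau (/ 4)) (RtoC 1) N))%C.
Proof.
  intros H. destruct (p_bounds tau H) as [P0 P1]. set (p := qpow tau (/ 4)) in *.
  assert (Xk : forall k, qpow tau (INR (S k) / 2 - / 4) = (p ^ (2 * k + 1))%C).
  { intros k. unfold p. rewrite <- qpow_nat. f_equal. rewrite plus_INR, mult_INR, S_INR. simpl. field. }
  assert (Xm : forall k, Cmod (p ^ (2 * k + 1))%C < 1).
  { intros k. rewrite Cmod_pow. apply pow_lt_1_compat. split. apply Cmod_ge_0. auto. lia. }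
  rewrite bpartial_prod. unfold acp. induction N.
  - simpl. field; apply C1_nz.
  - rewrite !cprod_S. cbv beta. rewrite IHN. unfold bfactor. cbv zeta. rewrite Xk.
    assert (A : cprod (fun k => 1 + RtoC 1 * p ^ (2 * k + 1))%C N <> RtoC 0).
    { clear IHN. induction N. apply C1_nz.
      change (cprod (fun k => 1 + RtoC 1 * p ^ (2 * k + 1))%C (S N)) with
        (cprod (fun k => 1 + RtoC 1 * p ^ (2 * k + 1))%C N * (1 + RtoC 1 * p ^ (2 * N + 1)))%C.
      apply Cmult_neq_0; auto. rewrite Cmult_1_l. apply one_plus_nz; auto. }
    assert (B : (1 + p ^ (2 * N + 1))%C <> RtoC 0) by (apply one_plus_nz; auto).
    field. split; auto.
Qed.

Lemma bfun_val tau : 0 < Im tau ->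
  th (qpow tau (/ 4)) true <> RtoC 0 /\
  bfun tau = (2 * (th (qpow tau (/ 4)) false / th (qpow tau (/ 4)) true))%C.
Proof.
  intros H. destruct (p_bounds tau H) as [P0 P1].
  destruct (main_limit (qpow tau (/ 4)) P0 P1) as [NZ CV].
  split; auto. unfold bfun. f_equal. apply lim_cv.
  eapply cv_ext. 2: exact CV. intros n. symmetry. apply bpartial_acp. auto.
Qed.

Lemma Im_double tau : Im (RtoC 2 * tau)%C = 2 * Im tau.
Proof. destruct tau. unfold Im. simpl. ring. Qed.

Lemma p_double tau : qpow (RtoC 2 * tau)%C (/ 4) = (qpow tau (/ 4) * qpow tau (/ 4))%C.
Proof.
  rewrite qpow_double. replace (2 * / 4) with (INR 2 * / 4) by (simpl; ring). rewrite qpow_nat. simpl. ring.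
Qed.

Lemma part_a tau : 0 < Im tau ->
  let x := bfun tau in let y := bfun (RtoC 2 * tau)%C in (x * x * y * y + 4 * y * y - 16 * x = 0)%C.
Proof.
  intros H x y.
  destruct (bfun_val tau H) as [NZ1 E1].
  assert (H2 : 0 < Im (RtoC 2 * tau)%C) by (rewrite Im_double; lra).
  destruct (bfun_val _ H2) as [NZ2 E2].
  rewrite p_double in NZ2, E2.
  destruct (p_bounds tau H) as [P0 P1].
  set (p := qpow tau (/ 4)) in *.
  pose proof (theta_id1 p P1) as I1. pose proof (theta_id2 p P1) as I2.
  unfold x, y. rewrite E1, E2.
  set (T := th p true) in *. set (F := th p false) in *.
  set (T2 := th (p * p) true) in *. set (F2 := th (p * p) false) in *.
  transitivity ((16 / (T * T * (T2 * T2))) * (F2 * F2 * (T * T + F * F) - 2 * (T * F) * (T2 * T2)))%C.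
  field. auto.
  rewrite I1, I2. ring.
Qed.

Lemma alg_b (x y z : C) : (x * x * y * y + 4 * y * y - 16 * x = 0)%C -> (y * y * z * z + 4 * z * z - 16 * y = 0)%C ->
  ((x + 2) ^ 4 * z ^ 4 = 2 ^ 8 * (x ^ 3 + 4 * x))%C.
Proof.
  intros A B.
  assert (hA : (y * y * (x * x + 4) = 16 * x)%C).
  { transitivity ((x * x * y * y + 4 * y * y - 16 * x) + 16 * x)%C. ring. rewrite A. ring. }
  assert (hB : (z * z * (y * y + 4) = 16 * y)%C).
  { transitivity ((y * y * z * z + 4 * z * z - 16 * y) + 16 * y)%C. ring. rewrite B. ring. }
  assert (K : ((y * y + 4) * (x * x + 4) = 4 * (x + 2) ^ 2)%C).
  { transitivity (y * y * (x * x + 4) + 4 * (x * x + 4))%C. ring. rewrite hA. ring. }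
  assert (S : (16 * ((x + 2) ^ 4 * z ^ 4) = 16 * (2 ^ 8 * (x ^ 3 + 4 * x)))%C).
  { transitivity ((4 * (x + 2) ^ 2) * (4 * (x + 2) ^ 2) * (z * z) * (z * z))%C. ring.
    rewrite <- K.
    transitivity ((z * z * (y * y + 4)) * (z * z * (y * y + 4)) * (x * x + 4) * (x * x + 4))%C. ring.
    rewrite hB.
    transitivity (256 * (y * y * (x * x + 4)) * (x * x + 4))%C. ring.
    rewrite hA. ring. }
  replace ((x + 2) ^ 4 * z ^ 4)%C with (/ 16 * (16 * ((x + 2) ^ 4 * z ^ 4)))%C.
  rewrite S. field. field.
Qed.

Theorem proposition7 (tau : C) (Htau : (0 < Im tau)%R) :
  (let x := bfun tau in
   let y := bfun (Cmult (RtoC 2) tau) in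
   (x * x * y * y + 4 * y * y - 16 * x = 0)%C)
  /\
  (let b1 := bfun tau in
   let b4 := bfun (Cmult (RtoC 4) tau) in
   ((b1 + 2) ^ 4 * b4 ^ 4 = 2 ^ 8 * (b1 ^ 3 + 4 * b1))%C).
Proof.
  split.
  - apply part_a. auto.
  - intros b1 b4. apply alg_b with (y := bfun (RtoC 2 * tau)%C).
    + apply part_a. auto.
    + assert (H2 : 0 < Im (RtoC 2 * tau)%C) by (rewrite Im_double; lra).
      pose proof (part_a _ H2) as P. cbv zeta in P.
      replace (RtoC 2 * (RtoC 2 * tau))%C with (RtoC 4 * tau)%C in P by ring. exact P.
Qed.
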